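(* Let $(A,E)$ be the direct producted noncommutative probability space over $D_N$ of noncommutative probability spaces $(A_1,\varphi_1),\dots,(A_N,\varphi_N)$, and let $x_1=(a_1,\dots,a_N)$ and $x_2=(b_1,\dots,b_N)$ be elements of $A$. Then $x_1$ and $x_2$ are free over $D_N$ in $(A,E)$ if and only if, for all $j=1,\dots,N$, the nonzero $a_j$ and $b_j$ are free in $(A_j,\varphi_j)$.
   Context: Each $(A_j,\varphi_j)$ is a unital complex algebra with a linear functional. $A=\times_{j=1}^N A_j$ with componentwise operations; $D_N=\mathbb{C}^N$ with componentwise operations, identified with the central subalgebra $\{(\alpha_1 1,\dots,\alpha_N 1)\}$ of $A$; $E((a_1,\dots,a_N))=(\varphi_1(a_1),\dots,\varphi_N(a_N))$. $D_N$-valued cumulants: $k_n(y_1,\dots,y_n)=\sum_{\pi\in NC(n)}\prod_{V\in\pi}E(\prod_{i\in V}y_i)\,\mu(\pi,1_n)$ ($NC(n)$ noncrossing partitions, $\mu$ Möbius function). Elements $x_1,x_2$ are free over $D_N$ if all mixed $D_N$-valued cumulants of elements of the algebras generated by $\{x_1\}\cup D_N$ and $\{x_2\}\cup D_N$ vanish. Scalar freeness in $(A_j,\varphi_j)$ is the usual (Voiculescu) freeness, equivalently vanishing of mixed scalar cumulants. *)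

(* Defs.v *)
From mathcomp Require Import all_boot all_order all_algebra.
Set Implicit Arguments. Unset Strict Implicit. Unset Printing Implicit Defensive.
Import Order.TTheory GRing.Theory Num.Theory.
Local Open Scope ring_scope.

Definition crossing n (V W : {set 'I_n}) : bool :=
  [exists a : 'I_n, exists b : 'I_n, exists c : 'I_n, exists d : 'I_n,
     [&& (a < b)%N, (b < c)%N, (c < d)%N,
         a \in V, c \in V, b \in W & d \in W]].

Definition is_NC n (P : {set {set 'I_n}}) : bool :=
  partition P [set: 'I_n] &&
  [forall V in P, forall W in P, (V != W) ==> ~~ crossing V W].

Definition refines n (P Q : {set {set 'I_n}}) : bool :=
  [forall V in P, exists W in Q, V \subset W].

Definition one_part n : {set {set 'I_n}} := [set [set: 'I_n]].

(* The recursion is on a fuel parameter; strictly coarser partitions have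
   strictly fewer blocks, so fuel #|P| suffices. *)
Fixpoint mob_aux n (k : nat) (P : {set {set 'I_n}}) : int :=
  match k with
  | 0 => 0
  | k'.+1 =>
      if P == one_part n then 1
      else - \sum_(Q : {set {set 'I_n}} | [&& is_NC Q, refines P Q & Q != P])
               mob_aux k' Q
  end.

Definition mob n (P : {set {set 'I_n}}) : int := mob_aux #|P| P.

Section Product.
Variables (C : numClosedFieldType) (N : nat) (A : 'I_N -> algType C).

Definition prodA := forall j : 'I_N, A j.

Definition prod_add (x y : prodA) : prodA := fun j => x j + y j.
Definition prod_mul (x y : prodA) : prodA := fun j => x j * y j.
(* embedding of D_N = C^N as the central subalgebra (alpha_1 1, ..., alpha_N 1) *)
Definition prod_D (d : 'I_N -> C) : prodA := fun j => (d j)%:A.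

Inductive in_algD (x : prodA) : prodA -> Prop :=
  | algD_x : in_algD x x
  | algD_D d : in_algD x (prod_D d)
  | algD_add y z : in_algD x y -> in_algD x z -> in_algD x (prod_add y z)
  | algD_mul y z : in_algD x y -> in_algD x z -> in_algD x (prod_mul y z).

(* D_N-valued cumulant k_n(y_1,...,y_n), with E = (phi_1, ..., phi_N);
   operations in D_N = C^N are componentwise, so its j-th component is
   sum_{P in NC(n)} (prod_{V in P} phi_j(prod_{i in V} y_i(j))) mu(P,1_n),
   where the inner product is taken in increasing order of i. *)
Definition cumD (phi : forall j, A j -> C) n (y : 'I_n -> prodA) : 'I_N -> C :=
  fun j => \sum_(P : {set {set 'I_n}} | is_NC P)
             (\prod_(V in P) phi j (\prod_(i in V) y i j)) * (mob P)%:~R.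

Definition free_over_D (phi : forall j, A j -> C) (x1 x2 : prodA) : Prop :=
  forall n (y : 'I_n -> prodA) (ind : 'I_n -> bool),
    (forall k, in_algD (if ind k then x1 else x2) (y k)) ->
    (exists k l, ind k != ind l) ->
    forall j, cumD phi y j = 0.

End Product.

Section Scalar.
Variables (C : numClosedFieldType) (B : algType C).

Inductive in_alg1 (a : B) : B -> Prop :=
  | alg1_a : in_alg1 a a
  | alg1_c c : in_alg1 a (c%:A)
  | alg1_add y z : in_alg1 a y -> in_alg1 a z -> in_alg1 a (y + z)
  | alg1_mul y z : in_alg1 a y -> in_alg1 a z -> in_alg1 a (y * z).

Definition free_scalar (phi : B -> C) (a b : B) : Prop :=
  forall (n : nat) (c : nat -> B) (ind : nat -> bool),
    (0 < n)%N ->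
    (forall k, (k < n)%N -> in_alg1 (if ind k then a else b) (c k)) ->
    (forall k, (k.+1 < n)%N -> ind k != ind k.+1) ->
    (forall k, (k < n)%N -> phi (c k) = 0) ->
    phi (\prod_(0 <= k < n) c k) = 0.

End Scalar.

(* Main.v *)
Require Import Defs.
From mathcomp Require Import all_boot all_order all_algebra zify.
Set Implicit Arguments. Unset Strict Implicit. Unset Printing Implicit Defensive.
Import Order.TTheory GRing.Theory Num.Theory.
Local Open Scope ring_scope.

Section Comb.
Variable n : nat.
Local Notation T := 'I_n.
Implicit Types (S U V W X : {set T}) (P Q : {set {set T}}).

Definition nc P := [forall V in P, forall W in P, (V != W) ==> ~~ crossing V W].
Definition NCS S P := partition P S && nc P.

Lemma is_NCE P : is_NC P = NCS [set: T] P. Proof. by []. Qed.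

Lemma crossingS V V' W W' : V \subset V' -> W \subset W' ->
  crossing V W -> crossing V' W'.
Proof.
move=> /subsetP sV /subsetP sW /existsP[a /existsP[b /existsP[c /existsP[d]]]].
move=> /andP[ab /andP[bc /andP[cd /andP[aV /andP[cV /andP[bW dW]]]]]].
apply/existsP; exists a; apply/existsP; exists b; apply/existsP; exists c.
apply/existsP; exists d; rewrite ab bc cd !(sV, sW) //.
Qed.

Lemma ncP P : reflect (forall V W, V \in P -> W \in P -> V != W -> ~~ crossing V W) (nc P).
Proof.
apply: (iffP idP).
  by move=> /forall_inP H V W VP WP; move: (H V VP) => /forall_inP /(_ W WP) /implyP.
move=> H; apply/forall_inP => V VP; apply/forall_inP => W WP; apply/implyP; exact: H.
Qed.

Lemma ncS P Q : P \subset Q -> nc Q -> nc P.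
Proof.
move=> /subsetP sPQ /ncP H; apply/ncP => V W VP WP; apply: H; exact: sPQ.
Qed.

Lemma part_eq P D V V' x : partition P D -> V \in P -> V' \in P ->
  x \in V -> x \in V' -> V = V'.
Proof.
move=> /partition_trivIset tP VP V'P xV xV'.
by rewrite -(def_pblock tP VP xV) (def_pblock tP V'P xV').
Qed.

Lemma part_sub P D V : partition P D -> V \in P -> V \subset D.
Proof. exact: partitionS. Qed.

Lemma part_cover P D x : partition P D -> x \in D -> exists2 V, V \in P & x \in V.
Proof.
move=> pP; rewrite -(cover_partition pP) => /bigcupP[V VP xV]; by exists V.
Qed.

Lemma part_n0 P D V : partition P D -> V \in P -> exists x, x \in V.
Proof. by move=> pP VP; have /set0Pn[x xV] := partition_neq0 pP VP; exists x. Qed.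

Definition refines_pick P V := odflt set0 [pick W in P | V \subset W].

Lemma refinesP P Q : reflect (forall V, V \in P -> exists2 W, W \in Q & V \subset W) (refines P Q).
Proof.
apply: (iffP forall_inP) => H V VP.
  by have /exists_inP[W WQ sVW] := H V VP; exists W.
by have [W WQ sVW] := H V VP; apply/exists_inP; exists W.
Qed.

Lemma refines_refl P : refines P P.
Proof. by apply/refinesP => V VP; exists V. Qed.

Lemma refines_card S P Q : partition P S -> partition Q S -> refines P Q ->
  Q != P -> (#|Q| < #|P|)%N.
Proof.
move=> pP pQ /refinesP rPQ nQP.
pose g V := refines_pick Q V.
have gP V : V \in P -> g V \in Q /\ V \subset g V.
  move=> VP; rewrite /g /refines_pick; case: pickP => [W /andP[WQ sVW] | no] //=.
  by have [W WQ sVW] := rPQ V VP; have := no W; rewrite WQ sVW.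
have eQ : Q = g @: P.
  apply/setP => W; apply/idP/imsetP => [WQ | [V VP ->]]; last by case: (gP V VP).
  have [x xW] := part_n0 pQ WQ.
  have [V VP xV] := part_cover pP (subsetP (part_sub pQ WQ) x xW).
  exists V => //; have [gVQ sV] := gP V VP.
  exact: (part_eq pQ WQ gVQ xW (subsetP sV x xV)).
have le := leq_imset_card g P; rewrite ltn_neqAle eQ le andbT.
apply/negP => /imset_injP ginj.
have sPQ : P \subset Q.
  apply/subsetP => V VP; have [gVQ sV] := gP V VP.
  suff -> : V = g V by [].
  apply/eqP; rewrite eqEsubset sV /=; apply/subsetP => x xgV.
  have [V' V'P xV'] := part_cover pP (subsetP (part_sub pQ gVQ) x xgV).
  have [gV'Q sV'] := gP V' V'P.
  have e : g V' = g V := part_eq pQ gV'Q gVQ (subsetP sV' x xV') xgV.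
  by rewrite -(ginj _ _ V'P VP e).
move: nQP; rewrite eq_sym eqEcard sPQ /= eQ le //.
Qed.

Fixpoint mobS S k P : int :=
  if k is k'.+1 then
    (if P == [set S] then 1
     else - \sum_(Q : {set {set T}} | [&& NCS S Q, refines P Q & Q != P]) mobS S k' Q)
  else 0.

Definition mu S P := mobS S #|P| P.

Lemma mob_auxE k P : mob_aux k P = mobS [set: T] k P.
Proof.
elim: k P => //= k IH P; congr (if _ then _ else - _); apply: eq_bigr => Q _; exact: IH.
Qed.

Lemma mobE P : mob P = mu [set: T] P.
Proof. exact: mob_auxE. Qed.

Lemma NCS_card S P : S != set0 -> NCS S P -> (0 < #|P|)%N.
Proof.
move=> /set0Pn[x xS] /andP[pP _]; have [V VP _] := part_cover pP xS.
by apply/card_gt0P; exists V.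
Qed.

Lemma mobS_fuel S P k1 k2 : S != set0 -> NCS S P -> (#|P| <= k1)%N -> (#|P| <= k2)%N ->
  mobS S k1 P = mobS S k2 P.
Proof.
move=> S0; elim: k1 k2 P => [|k1 IH] k2 P NP l1 l2.
  by have := NCS_card S0 NP; rewrite lt0n -leqn0 l1.
case: k2 l2 => [|k2] l2; first by have := NCS_card S0 NP; rewrite lt0n -leqn0 l2.
rewrite /=; case: ifP => // _; congr (- _); apply: eq_bigr => Q /and3P[NQ rPQ nQP].
have lt := refines_card (proj1 (andP NP)) (proj1 (andP NQ)) rPQ nQP.
apply: IH => //; rewrite -ltnS; exact: leq_trans lt _.
Qed.

Lemma NCS1 S : S != set0 -> NCS S [set S].
Proof.
move=> S0; rewrite /NCS /partition cover1 eqxx trivIset1 inE eq_sym S0 /=.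
by apply/ncP => V W; rewrite !inE => /eqP-> /eqP->; rewrite eqxx.
Qed.

Lemma refines1 S Q : partition Q S -> refines [set S] Q -> Q = [set S].
Proof.
move=> pQ /refinesP /(_ S (set11 S)) [W WQ sSW].
have eW : W = S by apply/eqP; rewrite eqEsubset sSW (part_sub pQ WQ).
subst W; apply/setP => W; rewrite inE; apply/idP/eqP => [W'Q|->//].
have [x xW] := part_n0 pQ W'Q.
exact: (part_eq pQ W'Q WQ xW (subsetP (part_sub pQ W'Q) x xW)).
Qed.

Lemma mu_one S : S != set0 -> mu S [set S] = 1.
Proof. by move=> S0; rewrite /mu cards1 /= eqxx. Qed.

Lemma mu_rec S P : S != set0 -> NCS S P -> P != [set S] ->
  mu S P = - \sum_(Q | [&& NCS S Q, refines P Q & Q != P]) mu S Q.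
Proof.
move=> S0 NP nP1; rewrite {1}/mu; have c0 := NCS_card S0 NP.
case E: #|P| => [|k]; first by rewrite E in c0.
rewrite /= (negbTE nP1); congr (- _).
apply: eq_bigr => Q /and3P[NQ rPQ nQP].
have lt := refines_card (proj1 (andP NP)) (proj1 (andP NQ)) rPQ nQP.
rewrite E ltnS in lt.
by rewrite /mu (mobS_fuel S0 NQ lt (leqnn _)).
Qed.

Lemma mu_sum S P : S != set0 -> NCS S P ->
  \sum_(Q | NCS S Q && refines P Q) mu S Q = (P == [set S])%:R.
Proof.
move=> S0 NP; case: eqP => [->|/eqP nP1].
  rewrite (big_pred1 [set S]) ?mu_one // => Q; apply/andP/eqP => [[NQ r]|->].
    exact: refines1 (proj1 (andP NQ)) r.
  by rewrite NCS1 // refines_refl.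
rewrite (bigD1 P) /=; last by rewrite NP refines_refl.
rewrite (mu_rec S0 NP nP1) addrC.
rewrite (eq_bigl (fun Q => [&& NCS S Q, refines P Q & Q != P])) ?subrr //.
by move=> Q; rewrite andbA.
Qed.

End Comb.

Section Comb2.
Variable n : nat.
Local Notation T := 'I_n.
Implicit Types (S U V W X : {set T}) (P Q σ τ ρ : {set {set T}}).

Lemma partitionI P (D : {set T}) :
  (forall W, W \in P -> exists x, x \in W) ->
  (forall W, W \in P -> W \subset D) ->
  (forall x, x \in D -> exists2 W, W \in P & x \in W) ->
  (forall W W' x, W \in P -> W' \in P -> x \in W -> x \in W' -> W = W') ->
  partition P D.
Proof.
move=> h0 hs hc hu; apply/and3P; split.
- rewrite eqEsubset; apply/andP; split; first by apply/bigcupsP => W WP; exact: hs.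
  apply/subsetP => x xD; have [W WP xW] := hc x xD; by apply/bigcupP; exists W.
- apply/trivIsetP => A B AP BP nAB; rewrite -setI_eq0; apply/eqP/setP => x.
  rewrite inE in_set0; apply/negbTE/negP => /andP[xA xB].
  by move: nAB; rewrite (hu A B x AP BP xA xB) eqxx.
- by apply/negP => /h0 [x]; rewrite in_set0.
Qed.

Definition restr P V := [set W in P | W \subset V].

Lemma restr_sub P V : restr P V \subset P.
Proof. by apply/subsetP => W; rewrite inE => /andP[]. Qed.

Lemma in_restr P V W : (W \in restr P V) = (W \in P) && (W \subset V).
Proof. by rewrite inE. Qed.

Lemma restr_part S σ τ V : partition σ S -> partition τ S -> refines τ σ ->
  V \in σ -> partition (restr τ V) V.
Proof.
move=> pσ pτ /refinesP rτσ Vσ; apply: partitionI.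
- by move=> W; rewrite in_restr => /andP[WP _]; exact: part_n0 pτ WP.
- by move=> W; rewrite in_restr => /andP[].
- move=> x xV; have [W Wτ xW] := part_cover pτ (subsetP (part_sub pσ Vσ) x xV).
  exists W => //; rewrite in_restr Wτ /=.
  have [V' V'σ sWV'] := rτσ W Wτ.
  by rewrite (part_eq pσ Vσ V'σ xV (subsetP sWV' x xW)).
- move=> W W' x; rewrite !in_restr => /andP[Wτ _] /andP[W'τ _]; exact: part_eq pτ Wτ W'τ.
Qed.

Lemma restr_NCS S σ τ V : NCS S σ -> NCS S τ -> refines τ σ ->
  V \in σ -> NCS V (restr τ V).
Proof.
move=> /andP[pσ _] /andP[pτ nτ] r Vσ; rewrite /NCS (restr_part pσ pτ r Vσ) /=.
exact: ncS (restr_sub τ V) nτ.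
Qed.

Lemma restr_bigcup σ τ : refines τ σ -> \bigcup_(V in σ) restr τ V = τ.
Proof.
move=> /refinesP r; apply/setP => W; apply/bigcupP/idP => [[V _]|Wτ].
  by rewrite in_restr => /andP[].
by have [V Vσ sWV] := r W Wτ; exists V => //; rewrite in_restr Wτ.
Qed.

Definition bunion σ (f : {set T} -> {set {set T}}) := \bigcup_(V in σ) f V.

Lemma bunion_part S σ (f : {set T} -> {set {set T}}) : partition σ S -> (forall V, V \in σ -> partition (f V) V) ->
  partition (bunion σ f) S.
Proof.
move=> pσ pf; apply: partitionI.
- move=> W /bigcupP[V Vσ WfV]; exact: part_n0 (pf V Vσ) WfV.
- move=> W /bigcupP[V Vσ WfV].
  exact: subset_trans (part_sub (pf V Vσ) WfV) (part_sub pσ Vσ).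
- move=> x xS; have [V Vσ xV] := part_cover pσ xS.
  have [W WfV xW] := part_cover (pf V Vσ) xV.
  by exists W => //; apply/bigcupP; exists V.
- move=> W W' x /bigcupP[V Vσ WfV] /bigcupP[V' V'σ W'fV'] xW xW'.
  have eV : V = V'.
    exact: part_eq pσ Vσ V'σ (subsetP (part_sub (pf V Vσ) WfV) x xW)
                          (subsetP (part_sub (pf V' V'σ) W'fV') x xW').
  subst V'; exact: part_eq (pf V Vσ) WfV W'fV' xW xW'.
Qed.

Lemma bunion_refines σ (f : {set T} -> {set {set T}}) : (forall V, V \in σ -> forall W, W \in f V -> W \subset V) ->
  refines (bunion σ f) σ.
Proof.
move=> h; apply/refinesP => W /bigcupP[V Vσ WfV]; exists V => //; exact: h.
Qed.

Lemma bunion_NCS S σ (f : {set T} -> {set {set T}}) : NCS S σ -> (forall V, V \in σ -> NCS V (f V)) ->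
  NCS S (bunion σ f).
Proof.
move=> /andP[pσ nσ] hf.
have pf V : V \in σ -> partition (f V) V by move=> Vσ; case/andP: (hf V Vσ).
rewrite /NCS (bunion_part pσ pf) /=; apply/ncP => W W' /bigcupP[V Vσ WfV]
  /bigcupP[V' V'σ W'fV'] nWW'.
have [eV|nV] := eqVneq V V'.
  subst V'; case/andP: (hf V Vσ) => _ /ncP; apply => //.
apply: contra (ncP _ nσ V V' Vσ V'σ nV); apply: crossingS.
  exact: part_sub (pf V Vσ) WfV.
exact: part_sub (pf V' V'σ) W'fV'.
Qed.

Lemma restr_bunion S σ (f : {set T} -> {set {set T}}) V : partition σ S -> (forall V, V \in σ -> partition (f V) V) ->
  V \in σ -> restr (bunion σ f) V = f V.
Proof.
move=> pσ pf Vσ; apply/setP => W; rewrite in_restr; apply/andP/idP => [[]|WfV].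
  move=> /bigcupP[V' V'σ WfV'] sWV.
  have [x xW] := part_n0 (pf V' V'σ) WfV'.
  have eV : V' = V.
    exact: part_eq pσ V'σ Vσ (subsetP (part_sub (pf V' V'σ) WfV') x xW) (subsetP sWV x xW).
  by subst V'.
split; first by apply/bigcupP; exists V.
exact: part_sub (pf V Vσ) WfV.
Qed.

Lemma refines_pickP S σ τ W : partition σ S -> partition τ S -> refines τ σ -> W \in τ ->
  refines_pick σ W \in σ /\ W \subset refines_pick σ W.
Proof.
move=> pσ pτ /refinesP r Wτ; rewrite /refines_pick; case: pickP => [V /andP[]|no] //=.
by have [V Vσ sWV] := r W Wτ; have := no V; rewrite Vσ sWV.
Qed.

Lemma prod_refine (R : comRingType) S σ τ (F : {set T} -> R) :
  partition σ S -> partition τ S -> refines τ σ ->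
  \prod_(W in τ) F W = \prod_(V in σ) \prod_(W in restr τ V) F W.
Proof.
move=> pσ pτ r.
rewrite (partition_big (refines_pick σ) (fun V => V \in σ)); last first.
  by move=> W Wτ; case: (refines_pickP pσ pτ r Wτ).
apply: eq_bigr => V Vσ; apply: eq_bigl => W; rewrite in_restr.
apply/andP/andP => [[Wτ /eqP <-]|[Wτ sWV]]; split => //.
  by case: (refines_pickP pσ pτ r Wτ).
have [Vp sWVp] := refines_pickP pσ pτ r Wτ.
have [x xW] := part_n0 pτ Wτ.
by rewrite (part_eq pσ Vp Vσ (subsetP sWVp x xW) (subsetP sWV x xW)).
Qed.

Lemma block_expand (R : comRingType) S σ (G : {set T} -> {set {set T}} -> bool)
    (h : {set T} -> {set {set T}} -> R) :
  NCS S σ ->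
  \prod_(V in σ) \sum_(ρ | NCS V ρ && G V ρ) h V ρ =
  \sum_(τ | [&& NCS S τ, refines τ σ & [forall V in σ, G V (restr τ V)]])
      \prod_(V in σ) h V (restr τ V).
Proof.
move=> Nσ; have pσ := proj1 (andP Nσ).
rewrite (big_distr_big_dep set0) /=.
pose hf (τ : {set {set T}}) : {ffun {set T} -> {set {set T}}} :=
  [ffun V => if V \in σ then restr τ V else set0].
rewrite (reindex_onto hf (fun f => bunion σ f)); last first.
  move=> f /familyP Hf; apply/ffunP => V; rewrite ffunE.
  have := Hf V; rewrite /=; case Vσ: (V \in σ) => /=.
    move=> /andP[NfV _]; apply: restr_bunion pσ _ Vσ => V' V'σ.
    by have := Hf V'; rewrite /= V'σ => /andP[/andP[]].
  by rewrite inE => /eqP.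
apply: eq_big => [τ|τ _]; last by apply: eq_bigr => V Vσ; rewrite ffunE Vσ.
have eb : bunion σ (hf τ) = \bigcup_(V in σ) restr τ V.
  by apply: eq_bigr => V Vσ; rewrite ffunE Vσ.
rewrite eb; apply/andP/and3P => [[/familyP Hf /eqP eτ]|[Nτ r /forall_inP HG]].
  have HV V : V \in σ -> NCS V (restr τ V) && G V (restr τ V).
    by move=> Vσ; have := Hf V; rewrite /= Vσ ffunE Vσ.
  have Nτ : NCS S τ.
    rewrite -eτ; apply: (bunion_NCS Nσ) => V Vσ; by case/andP: (HV V Vσ).
  have r : refines τ σ.
    rewrite -eτ; apply: bunion_refines => V Vσ W; by rewrite in_restr => /andP[].
  split => //; apply/forall_inP => V Vσ; by case/andP: (HV V Vσ).
split; last by rewrite restr_bigcup.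
apply/familyP => V /=; case Vσ: (V \in σ) => /=; rewrite ffunE Vσ //=.
  by change (NCS V (restr τ V) && G V (restr τ V)); rewrite (restr_NCS Nσ Nτ r Vσ) HG.
by rewrite inE.
Qed.

End Comb2.

Section MC.
Variable R : comRingType.
Variable n : nat.
Local Notation T := 'I_n.
Implicit Types (S U V W X : {set T}) (P Q σ τ ρ π : {set {set T}}).

Lemma block_proper S σ V : NCS S σ -> σ != [set S] -> V \in σ ->
  (#|V| < #|S|)%N /\ V != set0.
Proof.
move=> /andP[pσ _] n1 Vσ; split; last exact: partition_neq0 pσ Vσ.
have sVS := part_sub pσ Vσ; rewrite ltn_neqAle subset_leq_card // andbT.
apply/negP => /eqP eC; move: n1; have eVS : V = S.
  by apply/eqP; rewrite eqEcard sVS eC leqnn.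
subst V; suff -> : σ = [set S] by rewrite eqxx.
apply/setP => W; rewrite inE; apply/idP/eqP => [Wσ|->//].
have [x xW] := part_n0 pσ Wσ.
exact: part_eq pσ Wσ Vσ xW (subsetP (part_sub pσ Wσ) x xW).
Qed.

Lemma refines_one S τ : partition τ S -> refines τ [set S].
Proof.
by move=> pτ; apply/refinesP => W Wτ; exists S; rewrite ?set11 ?(part_sub pτ Wτ).
Qed.

Variable f : {set T} -> R.

Definition kap S := \sum_(σ | NCS S σ) (\prod_(V in σ) f V) * (mu S σ)%:~R.

Lemma sum_mu_ne1 S τ : S != set0 -> NCS S τ ->
  \sum_(σ | (NCS S σ && (σ != [set S])) && (NCS S τ && refines τ σ)) ((mu S σ)%:~R : R)
  = (τ == [set S])%:R - 1.
Proof.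
move=> S0 Nτ.
have := mu_sum S0 Nτ; rewrite (bigD1 [set S]) /=; last first.
  by rewrite NCS1 // refines_one //; case/andP: Nτ.
rewrite mu_one // => e.
have e2 : \sum_(σ | (NCS S σ && (σ != [set S])) && (NCS S τ && refines τ σ)) mu S σ
   = (τ == [set S])%:R - 1.
  rewrite -e addrC addrK; apply: eq_bigl => σ; rewrite Nτ /=.
  by rewrite andbAC.
rewrite -rmorph_sum /= e2 rmorphB /= rmorph1.
by case: (τ == [set S]).
Qed.

Lemma moment_cumulant S : S != set0 ->
  f S = \sum_(π | NCS S π) \prod_(V in π) kap V.
Proof.
have [m] := ubnP #|S|; elim: m S => // m IH S ltS S0.
set K := \sum_(π | NCS S π) _.
have hb σ : NCS S σ -> σ != [set S] ->
    \prod_(V in σ) f V = \sum_(τ | NCS S τ && refines τ σ) \prod_(W in τ) kap W.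
  move=> Nσ n1.
  transitivity (\prod_(V in σ) \sum_(ρ | NCS V ρ && true) \prod_(W in ρ) kap W).
    apply: eq_bigr => V Vσ; have [lt V0] := block_proper Nσ n1 Vσ.
    rewrite (IH V) ?(leq_trans lt) //; by apply: eq_bigl => ρ; rewrite andbT.
  rewrite (@block_expand n R S σ (fun _ _ => true)) //.
  apply: eq_big => [τ|τ /and3P[Nτ r _]].
    by apply/and3P/andP => [[-> ->]|[-> ->]] //; split=> //; apply/forall_inP.
  by rewrite (prod_refine _ (proj1 (andP Nσ)) (proj1 (andP Nτ)) r).
have ek : kap S = f S - \sum_(τ | NCS S τ && (τ != [set S])) \prod_(W in τ) kap W.
  rewrite /kap (bigD1 [set S]) ?NCS1 //= big_set1 mu_one // mulr1; congr (_ + _).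
  transitivity (\sum_(σ | NCS S σ && (σ != [set S]))
      \sum_(τ | NCS S τ && refines τ σ) (\prod_(W in τ) kap W) * (mu S σ)%:~R).
    by apply: eq_bigr => σ /andP[Nσ n1]; rewrite hb // big_distrl.
  rewrite (exchange_big_dep (fun τ => NCS S τ)) /=; last by move=> ? ? _ /andP[].
  transitivity (\sum_(τ | NCS S τ) (\prod_(W in τ) kap W) * ((τ == [set S])%:R - 1)).
    apply: eq_bigr => τ Nτ; rewrite -sum_mu_ne1 // big_distrr /=.
    by apply: eq_bigl => σ.
  rewrite (bigD1 [set S]) ?NCS1 //= eqxx subrr mulr0 add0r -sumrN.
  by apply: eq_bigr => τ /andP[_ /negbTE ->]; rewrite sub0r mulrN1.
have : K = kap S + \sum_(τ | NCS S τ && (τ != [set S])) \prod_(W in τ) kap W.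
  by rewrite /K (bigD1 [set S]) ?NCS1 //= big_set1.
by rewrite ek subrK => ->.
Qed.

Lemma cumulant_unique (c : {set T} -> R) S0 :
  (forall U, U \subset S0 -> U != set0 -> f U = \sum_(π | NCS U π) \prod_(V in π) c V) ->
  forall U, U \subset S0 -> U != set0 -> c U = kap U.
Proof.
move=> H U; have [m] := ubnP #|U|; elim: m U => // m IH U ltU sU U0.
have e1 := H U sU U0; rewrite (bigD1 [set U]) ?NCS1 //= big_set1 in e1.
have e2 := moment_cumulant U0; rewrite (bigD1 [set U]) ?NCS1 //= big_set1 in e2.
have e3 : \sum_(π | NCS U π && (π != [set U])) \prod_(V in π) c V =
          \sum_(π | NCS U π && (π != [set U])) \prod_(V in π) kap V.
  apply: eq_bigr => π /andP[Nπ n1]; apply: eq_bigr => V Vπ.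
  have [lt V0] := block_proper Nπ n1 Vπ.
  apply: IH => //; first exact: leq_trans lt _.
  by apply: subset_trans (part_sub (proj1 (andP Nπ)) Vπ) sU.
by move: e1; rewrite e3 e2 => /addIr ->.
Qed.

End MC.

Section Single.
Variable n : nat.
Local Notation T := 'I_n.
Implicit Types (S U V W X : {set T}) (P Q σ τ ρ π : {set {set T}}).

Lemma ncross1l k W : ~~ crossing [set k] W.
Proof.
apply/negP => /existsP[a /existsP[b /existsP[c /existsP[d]]]].
move=> /andP[ab /andP[bc /andP[cd /andP[aV /andP[cV /andP[bW dW]]]]]].
move: aV cV; rewrite !inE => /eqP ak /eqP ck; subst a c; lia.
Qed.

Lemma ncross1r k W : ~~ crossing W [set k].
Proof.
apply/negP => /existsP[a /existsP[b /existsP[c /existsP[d]]]].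
move=> /andP[ab /andP[bc /andP[cd /andP[aV /andP[cV /andP[bW dW]]]]]].
move: bW dW; rewrite !inE => /eqP bk /eqP dk; subst b d; lia.
Qed.

Lemma set10 (k : T) : [set k] != set0.
Proof. by apply/set0Pn; exists k; rewrite inE. Qed.

Lemma NCS_add1 U k π : k \in U -> NCS (U :\ k) π -> NCS U ([set k] |: π).
Proof.
move=> kU /andP[pπ nπ]; apply/andP; split.
  have D : [disjoint [set k] & U :\ k] by rewrite disjoints1 !inE eqxx.
  by have := partitionU1 pπ (set10 k) D; rewrite (setD1K kU).
apply/ncP => V W; rewrite !inE => /orP[/eqP->|Vπ] /orP[/eqP->|Wπ] nVW.
- by rewrite eqxx in nVW.
- exact: ncross1l.
- exact: ncross1r.
- exact: (ncP _ nπ).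
Qed.

Lemma NCS_del1 U k π : NCS U π -> [set k] \in π -> NCS (U :\ k) (π :\ [set k]).
Proof.
move=> /andP[pπ nπ] kπ; apply/andP; split.
  by have := partitionD1 pπ kπ.
by apply: ncS nπ; apply: subD1set.
Qed.

Variable R : comRingType.
Variable f : {set T} -> R.

Lemma sum_single U k (F : {set {set T}} -> R) : k \in U -> U != [set k] ->
  \sum_(π | NCS U π && ([set k] \in π)) F π =
  \sum_(π | NCS (U :\ k) π) F ([set k] |: π).
Proof.
move=> kU Uk.
rewrite (reindex_onto (fun π => [set k] |: π) (fun π => π :\ [set k])); last first.
  by move=> π /andP[_ kπ]; rewrite setD1K.
apply: eq_bigl => π; rewrite !inE eqxx /= andbT.
apply/andP/idP => [[Nπ /eqP eπ]|Nπ].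
  by have := NCS_del1 Nπ (setU11 _ _); rewrite eπ.
rewrite NCS_add1 //; split => //; rewrite setU1K //.
apply/negP => kπ; case/andP: Nπ => pπ _.
by have := part_sub pπ kπ; rewrite sub1set !inE eqxx.
Qed.

Lemma unit_cumulant k : f set0 = 1 -> (forall U, f U = f (U :\ k)) ->
  forall U, k \in U -> (1 < #|U|)%N -> kap f U = 0.
Proof.
move=> f0 fk U; have [m] := ubnP #|U|; elim: m U => // m IH U ltU kU cU.
have U0 : U != set0 by apply/set0Pn; exists k.
have Uk : U != [set k] by apply/negP => /eqP eU; rewrite eU cards1 in cU.
have U'0 : U :\ k != set0.
  by apply/negP => /eqP e; move: cU; rewrite -(setD1K kU) e setU0 cards1.
have k1 : kap f [set k] = 1.
  rewrite /kap (big_pred1 [set [set k]]) ?big_set1 ?mu_one ?set10 // ?mulr1.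
    by rewrite fk setDv f0.
  move=> π; apply/idP/eqP => [Nπ|->]; last by rewrite NCS1 ?set10.
  case/andP: Nπ => pπ _; apply/setP => V; rewrite inE; apply/idP/eqP => [Vπ|->].
    have := part_sub pπ Vπ; rewrite subset1 (negbTE (partition_neq0 pπ Vπ)) orbF.
    by move/eqP.
  have kc : k \in cover π by rewrite (cover_partition pπ) inE.
  have := pblock_mem kc; have := part_sub pπ (pblock_mem kc).
  rewrite subset1 (negbTE (partition_neq0 pπ (pblock_mem kc))) orbF.
  by move/eqP => ->.
have e1 := moment_cumulant f U0.
rewrite (bigD1 [set U]) ?NCS1 //= big_set1 in e1.
have e2 : \sum_(π | NCS U π && (π != [set U])) \prod_(V in π) kap f V =
          \sum_(π | NCS U π && ([set k] \in π)) \prod_(V in π) kap f V.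
  rewrite (bigID (fun π => [set k] \in π)) /= [X in _ + X]big1 ?addr0.
    apply: eq_bigl => π; case: (boolP ([set k] \in π)); rewrite ?andbT ?andbF //.
    move=> kπ; case NU: (NCS U π) => //=; apply/negP => /eqP e.
    move: kπ; rewrite e inE => /eqP ek. by rewrite ek eqxx in Uk.
  move=> π /andP[/andP[Nπ n1] nk].
  have pπ := proj1 (andP Nπ).
  have kπ : k \in cover π by rewrite (cover_partition pπ).
  have Bπ := pblock_mem kπ.
  rewrite (bigD1 (pblock π k)) //= IH ?mul0r //.
  - by have [lt _] := block_proper Nπ n1 Bπ; exact: leq_trans lt _.
  - by rewrite mem_pblock.
  rewrite ltnNge; apply/negP => c1; move: nk; apply/negP/negPn.
  have : pblock π k = [set k].
    apply/eqP; rewrite eq_sym eqEcard sub1set mem_pblock kπ cards1 c1 //.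
  by move=> <-.
rewrite e2 sum_single // in e1.
have e3 : \sum_(π | NCS (U :\ k) π) \prod_(V in [set k] |: π) kap f V =
          \sum_(π | NCS (U :\ k) π) \prod_(V in π) kap f V.
  apply: eq_bigr => π Nπ; rewrite big_setU1 /= ?k1 ?mul1r //.
  apply/negP => kπ; have := part_sub (proj1 (andP Nπ)) kπ.
  by rewrite sub1set !inE eqxx.
rewrite e3 -moment_cumulant // -fk in e1.
have := congr1 (fun x => x - f U) e1; rewrite /= subrr addrK => e.
by rewrite -e.
Qed.

End Single.

Section Alt.
Variable n : nat.
Local Notation T := 'I_n.
Implicit Types (S U V W X : {set T}) (P Q σ τ ρ π : {set {set T}}).

Definition adj S (a b : T) :=
  [&& a \in S, b \in S, (a < b)%N & [forall c in S, ~~ ((a < c)%N && (c < b)%N)]].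
Definition alt S (col : T -> bool) := forall a b, adj S a b -> col a != col b.
Definition pureP (col : T -> bool) V := forall x y, x \in V -> y \in V -> col x = col y.

Lemma mk_cross V W (a b c d : T) : (a < b)%N -> (b < c)%N -> (c < d)%N ->
  a \in V -> c \in V -> b \in W -> d \in W -> crossing V W.
Proof.
move=> ab bc cd aV cV bW dW.
apply/existsP; exists a; apply/existsP; exists b; apply/existsP; exists c.
apply/existsP; exists d; by rewrite ab bc cd aV cV bW dW.
Qed.

Lemma alt_singleton S π col : NCS S π -> S != set0 -> alt S col ->
  (forall V, V \in π -> pureP col V) -> exists2 k, k \in S & [set k] \in π.
Proof.
move=> /andP[pπ nπ] S0 Halt Hpure.
case: (boolP [exists k in S, [set k] \in π]) => [/exists_inP[k kS kπ]|no].
  by exists k.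
exfalso.
have nos k : k \in S -> [set k] \notin π.
  by move=> kS; apply/negP => kπ; move/negP: no; apply; apply/exists_inP; exists k.
have tπ := partition_trivIset pπ.
have cS := cover_partition pπ.
have Bin x : x \in S -> x \in pblock π x by move=> xS; rewrite mem_pblock cS.
have Bπ x : x \in S -> pblock π x \in π by move=> xS; apply: pblock_mem; rewrite cS.
have BS x y : x \in S -> y \in pblock π x -> y \in S.
  by move=> xS yB; exact: subsetP (part_sub pπ (Bπ x xS)) y yB.
have two x : x \in S -> exists2 y, y \in pblock π x & y != x.
  move=> xS; case: (boolP [exists y in pblock π x, y != x]) => [/exists_inP[y] | ny].
    by exists y.
  have e : pblock π x = [set x].
    apply/eqP; rewrite eqEsubset sub1set Bin // andbT; apply/subsetP => y yB.
    rewrite inE; case: (eqVneq y x) => // nyx; exfalso.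
    by move/negP: ny; apply; apply/exists_inP; exists y.
  by have := nos x xS; rewrite -e Bπ.
pose Pg g := [exists x : T, exists y : T,
  [&& (x < y)%N, (y - x == g)%N, x \in S & y \in pblock π x]].
have exg : exists g, Pg g.
  have [x0 x0S] := set0Pn _ S0; have [y yB nyx] := two x0 x0S.
  have yS := BS _ _ x0S yB.
  case: (ltngtP x0 y) => [lt|lt|e]; last by move: nyx; rewrite (val_inj e) eqxx.
    exists (y - x0)%N; apply/existsP; exists x0; apply/existsP; exists y.
    by rewrite lt eqxx x0S yB.
  exists (x0 - y)%N; apply/existsP; exists y; apply/existsP; exists x0.
  rewrite lt eqxx yS /=.
  by rewrite (same_pblock tπ yB) Bin.
have [m /existsP[a /existsP[d /and4P[ad /eqP gm aS dB]]] minm] := find_ex_minn exg.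
pose Ps m' := [exists c : T, [&& c \in S, (a < c)%N & (c == m' :> nat)]].
have exs : exists m', Ps m'.
  exists (val d); apply/existsP; exists d; by rewrite (BS _ _ aS dB) ad eqxx.
have [mb /existsP[b /and3P[bS ab /eqP bm]] minb] := find_ex_minn exs.
have bmin c : c \in S -> (a < c)%N -> (b <= c)%N.
  move=> cS' ac; rewrite bm; apply: minb; apply/existsP; exists c; by rewrite cS' ac eqxx.
have adjab : adj S a b.
  rewrite /adj aS bS ab /=; apply/forall_inP => c cS'; apply/negP => /andP[ac cb].
  by have := bmin c cS' ac; rewrite leqNgt cb.
have colab := Halt a b adjab.
set V := pblock π a.
have Vπ : V \in π := Bπ a aS.
have aV : a \in V := Bin a aS.
have bnV : b \notin V.
  by apply/negP => bV; move: colab; rewrite (Hpure V Vπ a b aV bV) eqxx.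
have dS := BS _ _ aS dB.
have bd : (b < d)%N.
  have := bmin d dS ad; rewrite leq_eqVlt => /orP[/eqP e|//].
  by move: bnV; rewrite (val_inj e) dB.
set W := pblock π b.
have Wπ : W \in π := Bπ b bS.
have bW : b \in W := Bin b bS.
have nVW : V != W by apply/negP => /eqP e; move: bnV; rewrite e bW.
have [w wW nwb] := two b bS.
have wS := BS _ _ bS wW.
have wnV : w \notin V.
  by apply/negP => wV; move: nVW; rewrite (part_eq pπ Vπ Wπ wV wW) eqxx.
have wna : w != a by apply/negP => /eqP e; move: wnV; rewrite e aV.
have wnd : w != d by apply/negP => /eqP e; move: wnV; rewrite e dB.
case: (ltngtP w a) => [wa|aw|e]; last by move: wna; rewrite (val_inj e) eqxx.
  have nWV : W != V by rewrite eq_sym.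
  by move: (ncP _ nπ W V Wπ Vπ nWV); rewrite (mk_cross wa ab bd wW bW aV dB).
case: (ltngtP w d) => [wd|dw|e]; last by move: wnd; rewrite (val_inj e) eqxx.
  case: (ltngtP w b) => [wb|bw|e]; last by move: nwb; rewrite (val_inj e) eqxx.
    have : Pg (b - w)%N.
      apply/existsP; exists w; apply/existsP; exists b; rewrite wb eqxx wS /=.
      by rewrite (same_pblock tπ wW) Bin.
    move/minm; rewrite -gm => H.
    have : (b - w < d - a)%N by clear -wb aw wd ab bd; lia.
    by rewrite ltnNge H.
  have : Pg (w - b)%N.
    by apply/existsP; exists b; apply/existsP; exists w; rewrite bw eqxx bS wW.
  move/minm; rewrite -gm => H.
  have : (w - b < d - a)%N by clear -bw aw wd ab bd; lia.
  by rewrite ltnNge H.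
by move: (ncP _ nπ V W Vπ Wπ nVW); rewrite (mk_cross ab bd dw aV dB bW wW).
Qed.

End Alt.

Section Prods.
Definition ltO n (x y : 'I_n) := (x < y)%N.

Lemma ltO_trans n : transitive (@ltO n).
Proof. move=> x y z; rewrite /ltO; exact: ltn_trans. Qed.

Lemma ltO_irr n : irreflexive (@ltO n).
Proof. by move=> x; rewrite /ltO ltnn. Qed.

Lemma sorted_index_enum n : sorted (@ltO n) (index_enum 'I_n).
Proof.
rewrite [index_enum _]unlock -enumT.
have := iota_ltn_sorted 0 n; rewrite -val_enum_ord sorted_map; by [].
Qed.

Lemma sorted_filt n (X : {pred 'I_n}) : sorted (@ltO n) [seq k <- index_enum 'I_n | k \in X].
Proof. exact: (sorted_filter (@ltO_trans n) _ (sorted_index_enum n)). Qed.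

Variable B : ringType.

Lemma prod_list n (X : {set 'I_n}) (F : 'I_n -> B) :
  \prod_(k in X) F k = \prod_(k <- [seq k <- index_enum 'I_n | k \in X]) F k.
Proof. by rewrite big_filter. Qed.

Lemma prod_mono m n (e : 'I_m -> 'I_n) (emono : forall a b, (e a < e b)%N = (a < b)%N)
  (F : 'I_n -> B) (V : {set 'I_m}) :
  \prod_(k in e @: V) F k = \prod_(k in V) F (e k).
Proof.
have einj : injective e.
  move=> a b eab; case: (ltngtP a b) => h; last exact: val_inj.
    by move: h; rewrite -emono eab ltnn.
  by move: h; rewrite -emono eab ltnn.
rewrite !prod_list -(big_map e xpredT F); congr bigop.
apply: (irr_sorted_eq (@ltO_trans n) (@ltO_irr n)).
- exact: sorted_filt.
- rewrite sorted_map; apply: sub_sorted (sorted_filt V) => a b; rewrite /ltO /= emono //.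
- move=> x; rewrite mem_filter mem_index_enum andbT.
  apply/imsetP/mapP => [[a aV ->]|[a]]; first by exists a; rewrite // mem_filter aV mem_index_enum.
  by rewrite mem_filter mem_index_enum andbT => aV ->; exists a.
Qed.

Lemma prod_cat n (X1 X2 : {set 'I_n}) (F : 'I_n -> B) :
  (forall a b, a \in X1 -> b \in X2 -> (a < b)%N) ->
  \prod_(k in X1 :|: X2) F k = \prod_(k in X1) F k * \prod_(k in X2) F k.
Proof.
move=> H; rewrite !prod_list -big_cat; congr bigop.
apply: (irr_sorted_eq (@ltO_trans n) (@ltO_irr n)).
- exact: sorted_filt.
- rewrite sorted_pairwise; last exact: ltO_trans.
  rewrite pairwise_cat -!sorted_pairwise ?sorted_filt; try exact: ltO_trans.
  rewrite !andbT; apply/allrelP => a b; rewrite !mem_filter !mem_index_enum !andbT.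
  exact: H.
- move=> x; rewrite mem_cat !mem_filter !mem_index_enum !andbT inE //.
Qed.

End Prods.

Section Relabel.
Variables (R : comRingType) (m n : nat) (e : 'I_m -> 'I_n).
Hypothesis emono : forall a b, (e a < e b)%N = (a < b)%N.

Lemma einj : injective e.
Proof.
move=> a b eab; case: (ltngtP a b) => h; last exact: val_inj.
  by move: h; rewrite -emono eab ltnn.
by move: h; rewrite -emono eab ltnn.
Qed.

Local Notation S := (e @: [set: 'I_m]).

Definition Emap (σ : {set {set 'I_m}}) : {set {set 'I_n}} := [set e @: (V : {set 'I_m}) | V in σ].
Definition Fmap (σ : {set {set 'I_n}}) : {set {set 'I_m}} := [set e @^-1: (V : {set 'I_n}) | V in σ].

Lemma imset_inj_e : injective (fun V : {set 'I_m} => e @: V).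
Proof. exact: imset_inj einj. Qed.

Lemma Emap_inj : injective Emap.
Proof. exact: imset_inj imset_inj_e. Qed.

Lemma preim_im (V : {set 'I_m}) : e @^-1: (e @: V) = V.
Proof.
apply/setP => x; rewrite inE; apply/imsetP/idP => [[y yV /einj ->]//|xV].
by exists x.
Qed.

Lemma FEmap σ : Fmap (Emap σ) = σ.
Proof.
rewrite /Fmap /Emap -imset_comp; rewrite -[RHS]imset_id; apply: eq_imset => V /=.
exact: preim_im.
Qed.

Lemma im_preim (V : {set 'I_n}) : V \subset S -> e @: (e @^-1: V) = V.
Proof.
move=> /subsetP sV; apply/setP => x; apply/imsetP/idP => [[y]|xV].
  by rewrite inE => ? ->.
by have /imsetP[y _ ey] := sV x xV; exists y; rewrite ?inE -?ey.
Qed.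

Lemma crossing_im (V W : {set 'I_m}) : crossing (e @: V) (e @: W) = crossing V W.
Proof.
apply/idP/idP.
  move=> /existsP[a /existsP[b /existsP[c /existsP[d]]]].
  move=> /andP[ab /andP[bc /andP[cd /andP[aV /andP[cV /andP[bW dW]]]]]].
  move: ab bc cd; move: aV cV bW dW => /imsetP[a' aV ->] /imsetP[c' cV ->] /imsetP[b' bW ->] /imsetP[d' dW ->] ab bc cd.
  apply/existsP; exists a'; apply/existsP; exists b'; apply/existsP; exists c'.
  apply/existsP; exists d'; rewrite -!emono ab bc cd aV cV bW dW //.
move=> /existsP[a /existsP[b /existsP[c /existsP[d]]]].
move=> /andP[ab /andP[bc /andP[cd /andP[aV /andP[cV /andP[bW dW]]]]]].
apply/existsP; exists (e a); apply/existsP; exists (e b); apply/existsP; exists (e c).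
apply/existsP; exists (e d); rewrite !emono ab bc cd !imset_f //.
Qed.

Lemma nc_E σ : nc (Emap σ) = nc σ.
Proof.
apply/ncP/ncP => H V W.
  move=> Vσ Wσ nVW; rewrite -crossing_im; apply: H; rewrite ?imset_f //.
  by rewrite (inj_eq imset_inj_e).
move=> /imsetP[V' V'σ ->] /imsetP[W' W'σ ->]; rewrite (inj_eq imset_inj_e) crossing_im.
exact: H.
Qed.

Lemma NCS_E σ : NCS S (Emap σ) = NCS [set: 'I_m] σ.
Proof. by rewrite /NCS nc_E /Emap (imset_partition _ _ einj). Qed.

Lemma refines_E σ τ : refines (Emap σ) (Emap τ) = refines σ τ.
Proof.
apply/refinesP/refinesP => H V.
  move=> Vσ; have [W /imsetP[W' W'τ ->] sW] := H _ (imset_f _ Vσ).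
  by exists W' => //; rewrite -(preim_im V) -(preim_im W') preimsetS.
move=> /imsetP[V' V'σ ->]; have [W Wτ sW] := H V' V'σ.
by exists (e @: W); rewrite ?imset_f ?imsetS.
Qed.

Lemma NCS_surj σ : NCS S σ -> Emap (Fmap σ) = σ.
Proof.
move=> /andP[pσ _]; rewrite /Emap /Fmap -imset_comp -[RHS]imset_id.
apply: eq_in_imset => V Vσ /=; apply: im_preim; exact: part_sub pσ Vσ.
Qed.

Lemma one_E : Emap [set [set: 'I_m]] = [set S].
Proof. by rewrite /Emap imset_set1. Qed.

Lemma card_E σ : #|Emap σ| = #|σ|.
Proof. apply: card_imset; exact: imset_inj_e. Qed.

Lemma mobS_E k σ : mobS S k (Emap σ) = mobS [set: 'I_m] k σ.
Proof.
elim: k σ => //= k IH σ.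
rewrite -one_E (inj_eq Emap_inj); case: ifP => // _; congr (- _).
rewrite (reindex_onto Emap Fmap); last first.
  by move=> τ /and3P[Nτ _ _]; exact: NCS_surj.
apply: eq_big => [τ|τ _]; last exact: IH.
by rewrite FEmap eqxx andbT NCS_E refines_E (inj_eq Emap_inj).
Qed.

Lemma mu_E σ : mu S (Emap σ) = mu [set: 'I_m] σ.
Proof. by rewrite /mu card_E mobS_E. Qed.

Lemma kap_relabel (f : {set 'I_n} -> R) :
  kap f S = kap (fun V => f (e @: V)) [set: 'I_m].
Proof.
rewrite /kap (reindex_onto Emap Fmap); last by move=> τ Nτ; exact: NCS_surj.
apply: eq_big => [τ|τ _].
  by rewrite FEmap eqxx andbT NCS_E.
by rewrite mu_E /Emap big_imset //; move=> V W _ _; exact: imset_inj_e.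
Qed.

End Relabel.

Section Merge.
Variable n : nat.
Local Notation T := 'I_n.
Implicit Types (S U V W X Z Bi Bj : {set T}) (P Q σ τ ρ π : {set {set T}}).
Variables (i j : T) (S0 : {set T}).
Hypotheses (ij : (i < j)%N) (iS : i \in S0) (jS : j \in S0)
  (adjS : forall k, k \in S0 -> ~~ ((i < k)%N && (k < j)%N)).

Lemma nij : i != j.
Proof. by apply/negP => /eqP e; move: ij; rewrite e ltnn. Qed.

Lemma out_ij k : k \in S0 -> k != i -> k != j -> ((k < i)%N || (j < k)%N).
Proof.
move=> kS ki kj; have := adjS kS.
have ki' : (k : nat) != i by apply: contra ki => /eqP e; apply/eqP/val_inj.
have kj' : (k : nat) != j by apply: contra kj => /eqP e; apply/eqP/val_inj.
clear -ki' kj'; lia.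
Qed.

Lemma cross_merge Bi Bj Z : i \in Bi -> j \in Bj -> Z \subset S0 -> i \notin Z -> j \notin Z ->
  crossing (Bi :|: Bj) Z || crossing Z (Bi :|: Bj) ->
  [|| crossing Bi Z, crossing Z Bi, crossing Bj Z | crossing Z Bj].
Proof.
move=> iBi jBj /subsetP ZS iZ jZ.
have blk x : x \in Bi :|: Bj -> exists B, exists e : T,
    [/\ (B == Bi) || (B == Bj), x \in B, e \in B & (e == i) || (e == j)].
  rewrite inE => /orP[xB|xB]; [exists Bi, i | exists Bj, j]; by rewrite ?eqxx ?orbT.
have eij e : (e == i) || (e == j) -> (i <= e)%N && (e <= j)%N.
  by case/orP => /eqP ->; rewrite leqnn (ltnW ij).
have toG1 B : (B == Bi) || (B == Bj) -> crossing B Z ->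
    [|| crossing Bi Z, crossing Z Bi, crossing Bj Z | crossing Z Bj].
  by case/orP => /eqP -> ->; rewrite ?orbT.
have toG2 B : (B == Bi) || (B == Bj) -> crossing Z B ->
    [|| crossing Bi Z, crossing Z Bi, crossing Bj Z | crossing Z Bj].
  by case/orP => /eqP -> ->; rewrite ?orbT.
have zout z : z \in Z -> ((z < i)%N || (j < z)%N).
  move=> zZ; apply: out_ij; first exact: ZS.
    by apply/negP => /eqP e; move: iZ; rewrite -e zZ.
  by apply/negP => /eqP e; move: jZ; rewrite -e zZ.
have zne z e : z \in Z -> (e == i) || (e == j) -> z != e.
  move=> zZ /orP[]/eqP->; apply/negP => /eqP ez; [move: iZ | move: jZ]; by rewrite -ez zZ.
case/orP.
  move=> /existsP[a /existsP[b /existsP[c /existsP[d]]]].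
  move=> /andP[ab /andP[bc /andP[cd /andP[aV /andP[cV /andP[bW dW]]]]]].
  have [A [ea [hA aA eaA hea]]] := blk a aV.
  have [Cc [ec [hC cC ecC hec]]] := blk c cV.
  have := eij _ hea; have := eij _ hec; have := zout b bW; have := zout d dW.
  have := zne d ea dW hea.
  move=> dea /orP[di|jd] /orP[bi|jb] /andP[iec ecj] /andP[iea eaj].
  - apply: (toG2 Cc hC); exact: (mk_cross bc cd (leq_trans di iec) bW dW cC ecC).
  - apply: (toG1 Cc hC); exact: (mk_cross (leq_ltn_trans ecj jb) bc cd ecC cC bW dW).
  - case: (ltngtP ea d) => [ead|dea'|e]; last by move: dea; rewrite (val_inj e) eqxx.
      apply: (toG1 A hA); exact: (mk_cross ab (leq_trans bi iea) ead aA eaA bW dW).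
    by clear -jd eaj dea'; lia.
  - apply: (toG1 Cc hC); exact: (mk_cross (leq_ltn_trans ecj jb) bc cd ecC cC bW dW).
move=> /existsP[a /existsP[b /existsP[c /existsP[d]]]].
move=> /andP[ab /andP[bc /andP[cd /andP[aV /andP[cV /andP[bW dW]]]]]].
have [Bb [eb [hB bB ebB heb]]] := blk b bW.
have [D [ed [hD dD edD hed]]] := blk d dW.
have := eij _ heb; have := eij _ hed; have := zout c cV; have := zout a aV.
move=> /orP[ai|ja] /orP[ci|jc] /andP[ied edj] /andP[ieb ebj].
- apply: (toG2 Bb hB); exact: (mk_cross ab bc (leq_trans ci ieb) aV cV bB ebB).
- apply: (toG2 D hD); exact: (mk_cross (leq_trans ai ied) (leq_ltn_trans edj jc) cd aV cV edD dD).
- apply: (toG2 Bb hB); exact: (mk_cross ab bc (leq_trans ci ieb) aV cV bB ebB).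
- apply: (toG1 Bb hB); exact: (mk_cross (leq_ltn_trans ebj ja) ab bc ebB bB aV cV).
Qed.

Definition Jn π := [set (if (i \in V) || (j \in V) then pblock π i :|: pblock π j else V) | V : {set T} in π].

Lemma Jn_mem X π : partition π X -> i \in X -> j \in X -> forall V,
  (V \in Jn π) = (V == pblock π i :|: pblock π j) || [&& V \in π, i \notin V & j \notin V].
Proof.
move=> pπ iX jX V; have cπ := cover_partition pπ.
apply/imsetP/idP => [[W Wπ ->]|].
  case: ifP => [_|/norP[iW jW]]; first by rewrite eqxx.
  by rewrite Wπ iW jW orbT.
case/orP => [/eqP ->|/and3P[Vπ iV jV]].
  exists (pblock π i); first by apply: pblock_mem; rewrite cπ.
  by rewrite mem_pblock cπ iX.
by exists V => //; rewrite (negbTE iV) (negbTE jV).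
Qed.

Lemma Jn_out ρ : (forall V, V \in ρ -> (i \notin V) && (j \notin V)) -> Jn ρ = ρ.
Proof.
move=> H; rewrite /Jn -[RHS]imset_id; apply: eq_in_imset => V Vρ.
by case/andP: (H V Vρ) => /negbTE -> /negbTE ->.
Qed.

Lemma sub_BiBj X τ W : partition τ X -> W \in τ -> W \subset pblock τ i :|: pblock τ j ->
  i \in X -> j \in X -> (W = pblock τ i) \/ (W = pblock τ j).
Proof.
move=> pτ Wτ sW iX jX; have cτ := cover_partition pτ.
have [x xW] := part_n0 pτ Wτ; move: (subsetP sW x xW); rewrite inE => /orP[xB|xB].
  left; apply: part_eq pτ Wτ _ xW xB; by apply: pblock_mem; rewrite cτ.
right; apply: part_eq pτ Wτ _ xW xB; by apply: pblock_mem; rewrite cτ.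
Qed.

Section JX.
Variables (X : {set T}).
Hypotheses (XS : X \subset S0) (iX : i \in X) (jX : j \in X).

Lemma Jn_NCS π : NCS X π -> NCS X (Jn π).
Proof.
move=> /andP[pπ nπ]; have cπ := cover_partition pπ.
set Bi := pblock π i; set Bj := pblock π j.
have Biπ : Bi \in π by apply: pblock_mem; rewrite cπ.
have Bjπ : Bj \in π by apply: pblock_mem; rewrite cπ.
have iBi : i \in Bi by rewrite mem_pblock cπ.
have jBj : j \in Bj by rewrite mem_pblock cπ.
have JM := Jn_mem pπ iX jX.
apply/andP; split.
  apply: partitionI.
  - move=> V; rewrite JM => /orP[/eqP->|/and3P[Vπ _ _]]; first by exists i; rewrite inE iBi.
    exact: part_n0 pπ Vπ.
  - move=> V; rewrite JM => /orP[/eqP->|/and3P[Vπ _ _]]; last exact: part_sub pπ Vπ.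
    by rewrite subUset !(part_sub pπ).
  - move=> x xX; have [W Wπ xW] := part_cover pπ xX.
    case: (boolP ((i \in W) || (j \in W))) => [/orP[iW|jW]|/norP[iW jW]].
    + exists (Bi :|: Bj); first by rewrite JM eqxx.
      by rewrite inE (part_eq pπ Wπ Biπ iW iBi) in xW *; rewrite xW.
    + exists (Bi :|: Bj); first by rewrite JM eqxx.
      by rewrite inE (part_eq pπ Wπ Bjπ jW jBj) in xW *; rewrite xW orbT.
    + by exists W => //; rewrite JM Wπ iW jW orbT.
  - move=> V V' x; rewrite !JM => /orP[/eqP->|/and3P[Vπ iV jV]] /orP[/eqP->|/and3P[V'π iV' jV']] //.
    + move=> xB xV'; exfalso; move: xB; rewrite inE => /orP[xB|xB].
        by move: iV'; rewrite (part_eq pπ V'π Biπ xV' xB) iBi.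
      by move: jV'; rewrite (part_eq pπ V'π Bjπ xV' xB) jBj.
    + move=> xV xB; exfalso; move: xB; rewrite inE => /orP[xB|xB].
        by move: iV; rewrite (part_eq pπ Vπ Biπ xV xB) iBi.
      by move: jV; rewrite (part_eq pπ Vπ Bjπ xV xB) jBj.
    + exact: part_eq pπ Vπ V'π.
apply/ncP => V V'; rewrite !JM.
have key Z : Z \in π -> i \notin Z -> j \notin Z ->
    crossing (Bi :|: Bj) Z || crossing Z (Bi :|: Bj) -> False.
  move=> Zπ iZ jZ cr.
  have ZS : Z \subset S0 := subset_trans (part_sub pπ Zπ) XS.
  have nBiZ : Bi != Z by apply/negP => /eqP e; move: iZ; rewrite -e iBi.
  have nBjZ : Bj != Z by apply/negP => /eqP e; move: jZ; rewrite -e jBj.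
  have := cross_merge iBi jBj ZS iZ jZ cr.
  rewrite (negbTE (ncP _ nπ _ _ Biπ Zπ nBiZ)) (negbTE (ncP _ nπ _ _ Zπ Biπ _)) ?(eq_sym Z) //.
  rewrite (negbTE (ncP _ nπ _ _ Bjπ Zπ nBjZ)) (negbTE (ncP _ nπ _ _ Zπ Bjπ _)) ?(eq_sym Z) //.
move=> /orP[/eqP->|/and3P[Vπ iV jV]] /orP[/eqP->|/and3P[V'π iV' jV']] nVV'.
- by rewrite eqxx in nVV'.
- by apply/negP => cr; apply: (key V' V'π iV' jV'); rewrite cr.
- by apply/negP => cr; apply: (key V Vπ iV jV); rewrite cr orbT.
- exact: (ncP _ nπ).
Qed.

Lemma Jn_pblock π : NCS X π ->
  pblock (Jn π) i = pblock π i :|: pblock π j /\ pblock (Jn π) j = pblock π i :|: pblock π j.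
Proof.
move=> Nπ; have [pJ _] := andP (Jn_NCS Nπ); have [pπ _] := andP Nπ.
have cπ := cover_partition pπ.
have BJ : pblock π i :|: pblock π j \in Jn π by rewrite (Jn_mem pπ iX jX) eqxx.
split; apply: def_pblock (partition_trivIset pJ) BJ _; rewrite inE mem_pblock cπ ?iX ?jX ?orbT //.
Qed.

Lemma Jn_idem π : NCS X π -> Jn (Jn π) = Jn π.
Proof.
move=> Nπ; have [pJ _] := andP (Jn_NCS Nπ); have [pπ _] := andP Nπ.
have [e1 e2] := Jn_pblock Nπ.
apply/setP => V; rewrite (Jn_mem pJ iX jX) e1 e2 setUid.
case: (eqVneq V (pblock π i :|: pblock π j)) => [->|nV]; first by rewrite (Jn_mem pπ iX jX) eqxx.
rewrite /= (Jn_mem pπ iX jX) (negbTE nV) /=.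
by case: (V \in π); case: (i \in V); case: (j \in V).
Qed.

Lemma Jn_restr σ τ : NCS X σ -> NCS X τ -> pblock σ i = pblock σ j ->
  (Jn τ == σ) = refines τ σ && [forall V in σ, Jn (restr τ V) == [set V]].
Proof.
move=> Nσ Nτ eσ; have [pσ _] := andP Nσ; have [pτ _] := andP Nτ.
have cσ := cover_partition pσ; have cτ := cover_partition pτ.
set Bi := pblock τ i; set Bj := pblock τ j.
have Biτ : Bi \in τ by apply: pblock_mem; rewrite cτ.
have Bjτ : Bj \in τ by apply: pblock_mem; rewrite cτ.
have iBi : i \in Bi by rewrite mem_pblock cτ.
have jBj : j \in Bj by rewrite mem_pblock cτ.
have JM := Jn_mem pτ iX jX.
have restrB V : V \in σ -> refines τ σ -> Bi :|: Bj \subset V ->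
    forall U, (U \in Jn (restr τ V)) =
       (U == Bi :|: Bj) || [&& U \in restr τ V, i \notin U & j \notin U].
  move=> Vσ r sB U.
  have pr := restr_part pσ pτ r Vσ.
  have iV : i \in V by apply: (subsetP sB); rewrite inE iBi.
  have jV : j \in V by apply: (subsetP sB); rewrite inE jBj orbT.
  have Bir : Bi \in restr τ V by rewrite in_restr Biτ (subset_trans (subsetUl _ _) sB).
  have Bjr : Bj \in restr τ V by rewrite in_restr Bjτ (subset_trans (subsetUr _ _) sB).
  have tr := partition_trivIset pr.
  by rewrite (Jn_mem pr iV jV) (def_pblock tr Bir iBi) (def_pblock tr Bjr jBj).
have noij U : U \in τ -> U \subset Bi :|: Bj -> i \notin U -> j \notin U -> False.
  move=> Uτ sU iU jU; case: (sub_BiBj pτ Uτ sU iX jX) => eU.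
    by move: iU; rewrite eU iBi.
  by move: jU; rewrite eU jBj.
have restr1 V : V \in τ -> restr τ V = [set V].
  move=> Vτ; apply/setP => U; rewrite in_restr inE; apply/andP/eqP => [[Uτ sUV]|->].
    have [x xU] := part_n0 pτ Uτ; exact: part_eq pτ Uτ Vτ xU (subsetP sUV x xU).
  by rewrite Vτ subxx.
apply/eqP/andP => [eJ|[r /forall_inP H]].
  have r : refines τ σ.
    apply/refinesP => W Wτ; rewrite -eJ.
    case: (boolP ((i \in W) || (j \in W))) => [/orP[iW|jW]|/norP[iW jW]].
    - exists (Bi :|: Bj); first by rewrite JM eqxx.
      by rewrite (part_eq pτ Wτ Biτ iW iBi) subsetUl.
    - exists (Bi :|: Bj); first by rewrite JM eqxx.
      by rewrite (part_eq pτ Wτ Bjτ jW jBj) subsetUr.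
    - by exists W; rewrite ?JM ?Wτ ?iW ?jW ?orbT.
  split => //; apply/forall_inP => V; rewrite -{1}eJ JM => /orP[/eqP eV|/and3P[Vτ iV jV]].
    have Vσ : V \in σ by rewrite -eJ JM eV eqxx.
    apply/eqP/setP => U; rewrite (restrB V Vσ r) -?eV ?subxx // in_set1.
    case: eqP => //= _; apply/negbTE/negP => /and3P[]; rewrite in_restr => /andP[Uτ sUV] iU jU.
    by apply: (noij U Uτ _ iU jU); rewrite -eV.
  rewrite restr1 // Jn_out // => U; rewrite inE => /eqP ->; by rewrite iV jV.
set Vij := pblock σ i.
have Vijσ : Vij \in σ by apply: pblock_mem; rewrite cσ.
have iVij : i \in Vij by rewrite mem_pblock cσ.
have jVij : j \in Vij by rewrite /Vij eσ mem_pblock cσ.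
have /refinesP rr := r.
have sBi : Bi \subset Vij.
  have [V' V'σ sV'] := rr Bi Biτ.
  by rewrite -(part_eq pσ V'σ Vijσ (subsetP sV' i iBi) iVij).
have sBj : Bj \subset Vij.
  have [V' V'σ sV'] := rr Bj Bjτ.
  by rewrite -(part_eq pσ V'σ Vijσ (subsetP sV' j jBj) jVij).
have eVij : Vij = Bi :|: Bj.
  have := H Vij Vijσ => /eqP /setP /(_ Vij); rewrite inE eqxx.
  rewrite (restrB Vij Vijσ r) ?subUset ?sBi ?sBj // iVij /= andbF orbF.
  by move/eqP.
have other V : V \in σ -> V != Vij -> [/\ i \notin V, j \notin V & V \in τ].
  move=> Vσ nV.
  have iV : i \notin V by apply/negP => iV; move: nV; rewrite (part_eq pσ Vσ Vijσ iV iVij) eqxx.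
  have jV : j \notin V by apply/negP => jV; move: nV; rewrite (part_eq pσ Vσ Vijσ jV jVij) eqxx.
  split => //.
  have := H V Vσ; rewrite Jn_out; last first.
    move=> U; rewrite in_restr => /andP[_ sUV].
    by apply/andP; split; apply/negP => /(subsetP sUV); [apply/negP | apply/negP].
  by move=> /eqP e; have := set11 V; rewrite -e in_restr => /andP[].
apply/setP => U; rewrite JM; apply/idP/idP.
  case/orP => [/eqP->|/and3P[Uτ iU jU]]; first by rewrite -eVij.
  have [V Vσ sUV] := rr U Uτ.
  case: (eqVneq V Vij) => [eV|nV].
    by exfalso; apply: (noij U Uτ _ iU jU); rewrite -eVij -eV.
  have [_ _ Vτ] := other V Vσ nV.
  have [x xU] := part_n0 pτ Uτ.
  by rewrite (part_eq pτ Uτ Vτ xU (subsetP sUV x xU)).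
move=> Uσ; case: (eqVneq U Vij) => [->|nU]; first by rewrite eVij eqxx.
have [iU jU Uτ] := other U Uσ nU.
by rewrite Uτ iU jU orbT.
Qed.

End JX.

Lemma setD1_id (x : T) (A : {set T}) : x \notin A -> A :\ x = A.
Proof. by move=> xA; apply/setP => y; rewrite !inE; case: eqP => // ->; rewrite (negbTE xA). Qed.

Definition hat U := if i \in U then j |: U else U.

Lemma in_hat U x : (x \in hat U) = ((i \in U) && (x == j)) || (x \in U).
Proof. by rewrite /hat; case: ifP => iU; rewrite ?inE ?iU //=. Qed.

Lemma hat_sub U : U \subset hat U.
Proof. by apply/subsetP => x xU; rewrite in_hat xU orbT. Qed.

Lemma hatK U : j \notin U -> hat U :\ j = U.
Proof. by move=> jU; rewrite /hat; case: ifP => _; rewrite ?setU1K // setD1_id. Qed.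

Section HatBij.
Variable U : {set T}.
Hypotheses (US : U \subset S0 :\ j) (iU : i \in U).
Let X := j |: U.

Lemma jU : j \notin U.
Proof. by apply/negP => /(subsetP US); rewrite !inE eqxx. Qed.

Lemma US0 : U \subset S0.
Proof. by apply: subset_trans US (subD1set _ _). Qed.

Definition Amap π := [set hat W | W in π].
Definition Dmap σ := [set V :\ j | V in σ].

Lemma hat_notj W : W \subset U -> j \notin W.
Proof. by move=> /subsetP sW; apply/negP => /sW; rewrite (negbTE jU). Qed.

Lemma A_NCS π : NCS U π -> NCS X (Amap π).
Proof.
move=> /andP[pπ nπ]; have cπ := cover_partition pπ.
have jW W : W \in π -> j \notin W by move=> Wπ; apply: hat_notj (part_sub pπ Wπ).
apply/andP; split.
  apply: partitionI.
  - move=> V /imsetP[W Wπ ->]; have [x xW] := part_n0 pπ Wπ; exists x; exact: (subsetP (hat_sub W)).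
  - move=> V /imsetP[W Wπ ->]; apply/subsetP => x; rewrite in_hat => /orP[/andP[_ /eqP->]|xW].
      by rewrite setU11.
    by rewrite setU1r // (subsetP (part_sub pπ Wπ)).
  - move=> x; rewrite in_setU1 => /orP[/eqP->|xU].
      have [W Wπ iW] := part_cover pπ iU.
      by exists (hat W); rewrite ?imset_f // in_hat iW eqxx.
    have [W Wπ xW] := part_cover pπ xU.
    by exists (hat W); rewrite ?imset_f // in_hat xW orbT.
  - move=> V V' x /imsetP[W Wπ ->] /imsetP[W' W'π ->]; rewrite !in_hat.
    case: (eqVneq x j) => [->|nxj]; rewrite ?andbT ?andbF /=.
      move=> /orP[iW|jW'] /orP[iW'|jW''].
      + by rewrite (part_eq pπ Wπ W'π iW iW').
      + by move: (jW W' W'π); rewrite jW''.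
      + by move: (jW W Wπ); rewrite jW'.
      + by move: (jW W Wπ); rewrite jW'.
    by move=> xW xW'; rewrite (part_eq pπ Wπ W'π xW xW').
have key W W' : W \in π -> W' \in π -> W != W' -> i \in W ->
    ~~ crossing (j |: W) W' && ~~ crossing W' (j |: W).
  move=> Wπ W'π nWW' iW.
  have iW' : i \notin W'.
    by apply/negP => iW'; move: nWW'; rewrite (part_eq pπ Wπ W'π iW iW') eqxx.
  have W'S : W' \subset S0 := subset_trans (part_sub pπ W'π) US0.
  have H := cross_merge iW (set11 j) W'S iW' (jW W' W'π).
  rewrite -negb_or; apply/negP => cr; move: H; rewrite setUC -/(j |: W) cr => /(_ isT).
  rewrite (negbTE (ncP _ nπ _ _ Wπ W'π nWW')) (negbTE (ncP _ nπ _ _ W'π Wπ _)) ?(eq_sym W') //.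
  by rewrite (negbTE (ncross1l _ _)) (negbTE (ncross1r _ _)).
apply/ncP => V V' /imsetP[W Wπ ->] /imsetP[W' W'π ->] nV.
have nWW' : W != W' by apply: (contraNneq _ nV) => ->.
have nW'W : W' != W by rewrite eq_sym.
rewrite /hat; case: ifP => iW; case: ifP => iW'.
- by move: nWW'; rewrite (part_eq pπ Wπ W'π iW iW') eqxx.
- by case/andP: (key W W' Wπ W'π nWW' iW).
- by case/andP: (key W' W W'π Wπ nW'W iW').
- exact: (ncP _ nπ).
Qed.

Lemma A_pblock π : NCS U π -> pblock (Amap π) i == pblock (Amap π) j.
Proof.
move=> Nπ; have [pA _] := andP (A_NCS Nπ); have [pπ _] := andP Nπ.
have [W Wπ iW] := part_cover pπ iU.
have tA := partition_trivIset pA.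
have hW : hat W \in Amap π by apply: imset_f.
rewrite (def_pblock tA hW (_ : i \in hat W)) ?(def_pblock tA hW (_ : j \in hat W)) //.
  by rewrite in_hat iW eqxx.
by rewrite in_hat iW orbT.
Qed.

Lemma DA π : NCS U π -> Dmap (Amap π) = π.
Proof.
move=> /andP[pπ _]; rewrite /Dmap /Amap -imset_comp -[RHS]imset_id.
apply: eq_in_imset => W Wπ /=; apply: hatK; exact: hat_notj (part_sub pπ Wπ).
Qed.

Lemma D_NCS σ : NCS X σ -> pblock σ i == pblock σ j -> NCS U (Dmap σ).
Proof.
move=> /andP[pσ nσ] /eqP eσ; have cσ := cover_partition pσ.
have iX : i \in X by rewrite setU1r.
have jX : j \in X by rewrite setU11.
have ji V : V \in σ -> j \in V -> i \in V.
  move=> Vσ jV; have := def_pblock (partition_trivIset pσ) Vσ jV.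
  by rewrite -eσ => <-; rewrite mem_pblock cσ.
apply/andP; split.
  apply: partitionI.
  - move=> V' /imsetP[V Vσ ->]; have [x xV] := part_n0 pσ Vσ.
    case: (eqVneq x j) => [exj|nxj].
      exists i; rewrite !inE nij (ji V Vσ) //; by rewrite -exj.
    by exists x; rewrite !inE nxj.
  - move=> V' /imsetP[V Vσ ->]; apply/subsetP => x; rewrite !inE => /andP[nxj xV].
    by have := subsetP (part_sub pσ Vσ) x xV; rewrite !inE (negbTE nxj).
  - move=> x xU; have xX : x \in X by rewrite setU1r.
    have [V Vσ xV] := part_cover pσ xX; exists (V :\ j); first exact: imset_f.
    rewrite !inE xV andbT; apply/negP => /eqP e; by move: jU; rewrite -e xU.
  - move=> V1 V2 x /imsetP[W1 W1σ ->] /imsetP[W2 W2σ ->]; rewrite !inE => /andP[_ x1] /andP[_ x2].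
    by rewrite (part_eq pσ W1σ W2σ x1 x2).
apply/ncP => V1 V2 /imsetP[W1 W1σ ->] /imsetP[W2 W2σ ->] n12.
have nW : W1 != W2 by apply: (contraNneq _ n12) => ->.
apply: contra (ncP _ nσ _ _ W1σ W2σ nW); apply: crossingS; exact: subD1set.
Qed.

Lemma AD σ : NCS X σ -> pblock σ i == pblock σ j -> Amap (Dmap σ) = σ.
Proof.
move=> /andP[pσ _] /eqP eσ; have cσ := cover_partition pσ.
have tσ := partition_trivIset pσ.
rewrite /Dmap /Amap -imset_comp -[RHS]imset_id; apply: eq_in_imset => V Vσ /=.
rewrite /hat !inE nij /=.
case: (boolP (i \in V)) => iV.
  have jV : j \in V.
    by have := def_pblock tσ Vσ iV; rewrite eσ => <-; rewrite mem_pblock cσ setU11.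
  by rewrite setD1K.
have jV : j \notin V.
  apply/negP => jV; have := def_pblock tσ Vσ jV; rewrite -eσ => e.
  by move: iV; rewrite -e mem_pblock cσ setU1r.
by rewrite setD1_id.
Qed.

Lemma sum_hat (R : comRingType) (F : {set T} -> R) :
  \sum_(σ | NCS X σ && (pblock σ i == pblock σ j)) \prod_(V in σ) F V =
  \sum_(π | NCS U π) \prod_(W in π) F (hat W).
Proof.
rewrite (reindex_onto Amap Dmap); last by move=> σ /andP[Nσ eσ]; exact: AD.
have eqP' π : (NCS X (Amap π) && (pblock (Amap π) i == pblock (Amap π) j)) &&
              (Dmap (Amap π) == π) = NCS U π.
  apply/idP/idP => [/andP[/andP[NA eA] /eqP <-]|Nπ]; first exact: D_NCS.
  by rewrite A_NCS // A_pblock // DA ?eqxx.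
apply: eq_big => [π|π]; first exact: eqP'.
rewrite eqP' => Nπ; rewrite big_imset //.
move=> W1 W2 W1π W2π e; have [pπ _] := andP Nπ.
by rewrite -(hatK (hat_notj (part_sub pπ W1π))) e hatK // (hat_notj (part_sub pπ W2π)).
Qed.

End HatBij.

Section Assemble.
Variable R : comRingType.
Variable f : {set T} -> R.

Definition gJ X := \sum_(ρ | NCS X ρ && (Jn ρ == [set X])) \prod_(W in ρ) kap f W.

Lemma gJ_out W : W != set0 -> i \notin W -> j \notin W -> gJ W = kap f W.
Proof.
move=> W0 iW jW; rewrite /gJ (big_pred1 [set W]) ?big_set1 // => ρ.
apply/andP/eqP => [[Nρ /eqP <-]|->]; last first.
  rewrite NCS1 // Jn_out ?eqxx // => V; rewrite inE => /eqP->; by rewrite iW jW.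
rewrite Jn_out // => V Vρ; have sV := part_sub (proj1 (andP Nρ)) Vρ.
by apply/andP; split; apply/negP => /(subsetP sV); apply/negP.
Qed.

Lemma merge_formula U : U \subset S0 :\ j -> U != set0 ->
  kap (fun V => f (hat V)) U = gJ (hat U).
Proof.
move=> sU U0.
symmetry; apply: (@cumulant_unique R n (fun V => f (hat V)) (fun V => gJ (hat V)) (S0 :\ j)) => //.
move=> U' sU' U'0.
have jU' : j \notin U' by apply/negP => /(subsetP sU'); rewrite !inE eqxx.
case: (boolP (i \in U')) => iU'; last first.
  rewrite /hat (negbTE iU') moment_cumulant //; apply: eq_bigr => π Nπ.
  apply: eq_bigr => W Wπ; have sW := part_sub (proj1 (andP Nπ)) Wπ.
  have iW : i \notin W by apply/negP => /(subsetP sW); apply/negP.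
  have jW : j \notin W by apply/negP => /(subsetP sW); apply/negP.
  by rewrite (negbTE iW) gJ_out // (partition_neq0 (proj1 (andP Nπ)) Wπ).
set X := j |: U'.
have hU' : hat U' = X by rewrite /hat iU'.
have XS : X \subset S0.
  by rewrite subUset sub1set jS (subset_trans sU' (subD1set _ _)).
have iX : i \in X by rewrite setU1r.
have jX : j \in X by rewrite setU11.
have X0 : X != set0 by apply/set0Pn; exists j.
rewrite hU' moment_cumulant // -(sum_hat sU' iU' gJ).
rewrite (partition_big (Jn) (fun σ => NCS X σ && (pblock σ i == pblock σ j))); last first.
  move=> π Nπ; have [e1 e2] := Jn_pblock XS iX jX Nπ.
  by rewrite Jn_NCS // e1 e2 eqxx.
apply: eq_bigr => σ /andP[Nσ /eqP eσ].
rewrite /gJ (@block_expand n R X σ (fun V ρ => Jn ρ == [set V]) (fun V ρ => \prod_(W in ρ) kap f W)) //.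
apply: eq_big => [τ|τ /andP[Nτ eJ]].
  apply/andP/and3P => [[Nτ /eqP eJ]|[Nτ r H]].
    have := Jn_restr iX jX Nσ Nτ eσ; rewrite eJ eqxx => /esym /andP[r H].
    by split.
  split => //; rewrite (Jn_restr iX jX Nσ Nτ eσ) r; exact: H.
have r : refines τ σ by move: eJ; rewrite (Jn_restr iX jX Nσ Nτ eσ) => /andP[].
by rewrite (prod_refine _ (proj1 (andP Nσ)) (proj1 (andP Nτ)) r).
Qed.

End Assemble.

Lemma two_blocks ρ : NCS S0 ρ -> Jn ρ = [set S0] ->
  (forall W, W \in ρ -> W = pblock ρ i \/ W = pblock ρ j) /\ pblock ρ i :|: pblock ρ j = S0.
Proof.
move=> /andP[pρ _] eJ; have JM := Jn_mem pρ iS jS; have cρ := cover_partition pρ.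
have tρ := partition_trivIset pρ.
have e0 : pblock ρ i :|: pblock ρ j = S0.
  have := set11 S0; rewrite -eJ JM iS /= andbF orbF => /eqP; by [].
split => // W Wρ; case: (boolP (i \in W)) => iW; first by left; rewrite (def_pblock tρ Wρ iW).
case: (boolP (j \in W)) => jW; first by right; rewrite (def_pblock tρ Wρ jW).
have : W \in Jn ρ by rewrite JM Wρ iW jW orbT.
by rewrite eJ inE => /eqP eW; move: iW; rewrite eW iS.
Qed.

End Merge.

Section Enum.
Variable n : nat.
Variable V : {set 'I_n}.

Lemma sorted_enum_set : sorted (@ltO n) (enum V).
Proof.
rewrite -deprecated_filter_index_enum; exact: sorted_filt.
Qed.

Lemma enum_val_mono (a b : 'I_#|V|) : (enum_val a < enum_val b)%N = (a < b)%N.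
Proof.
have x0 : 'I_n := enum_val a.
have H (i j : 'I_#|V|) : (i < j)%N -> (@enum_val _ (mem V) i < enum_val j)%N.
  move=> ij; rewrite !(enum_val_nth x0).
  apply: (sorted_ltn_nth (@ltO_trans n) x0 sorted_enum_set); rewrite // inE -cardE ltn_ord //.
case: (ltngtP a b) => [ab|ba|e]; first by rewrite H.
  by apply/negbTE; rewrite -leqNgt ltnW // H.
by rewrite (val_inj e) ltnn.
Qed.

Lemma enum_val_im : [set enum_val i | i in [set: 'I_#|V|]] = V.
Proof.
apply/setP => x; apply/imsetP/idP => [[i _ ->]|xV]; first exact: enum_valP.
by exists (enum_rank_in xV x); rewrite ?inE // enum_rankK_in.
Qed.
End Enum.

Lemma eq_kap (R : comRingType) n (f g : {set 'I_n} -> R) S :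
  (forall V, f V = g V) -> kap f S = kap g S.
Proof.
move=> e; rewrite /kap; apply: eq_bigr => σ _; congr (_ * _); apply: eq_bigr => V _; exact: e.
Qed.

Lemma kap_set1 (R : comRingType) n (f : {set 'I_n} -> R) k : kap f [set k] = f [set k].
Proof.
rewrite /kap (big_pred1 [set [set k]]) ?big_set1 ?mu_one ?set10 // ?mulr1 //.
move=> π; apply/idP/eqP => [Nπ|->]; last by rewrite NCS1 ?set10.
case/andP: Nπ => pπ _; apply/setP => V; rewrite inE; apply/idP/eqP => [Vπ|->].
  have := part_sub pπ Vπ; rewrite subset1 (negbTE (partition_neq0 pπ Vπ)) orbF.
  by move/eqP.
have kc : k \in cover π by rewrite (cover_partition pπ) inE.
have := pblock_mem kc; have := part_sub pπ (pblock_mem kc).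
rewrite subset1 (negbTE (partition_neq0 pπ (pblock_mem kc))) orbF.
by move/eqP => ->.
Qed.

Section Alg.
Variables (K : numClosedFieldType) (B : algType K) (phi : B -> K).
Hypotheses (phi_add : forall a b, phi (a + b) = phi a + phi b)
           (phi_scale : forall c a, phi (c *: a) = c * phi a)
           (phi_unit : phi 1 = 1).

Definition fy n (y : 'I_n -> B) (V : {set 'I_n}) := phi (\prod_(i in V) y i).
Definition colored (a b : B) n (y : 'I_n -> B) (ind : 'I_n -> bool) :=
  forall k, in_alg1 (if ind k then a else b) (y k).
Definition VanMixed (a b : B) := forall n (y : 'I_n -> B) ind,
  colored a b y ind -> (exists k l, ind k != ind l) -> kap (fy y) [set: 'I_n] = 0.

Lemma kap_sub_relabel n (y : 'I_n -> B) (V : {set 'I_n}) :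
  kap (fy y) V = kap (fy (fun i : 'I_#|V| => y (enum_val i))) [set: 'I_#|V|].
Proof.
rewrite -{1}(enum_val_im V) (kap_relabel (@enum_val_mono n V)).
apply: eq_kap => W; rewrite /fy prod_mono //; exact: enum_val_mono.
Qed.

Lemma dirA a b : VanMixed a b -> free_scalar phi a b.
Proof.
move=> HV N c ind N0 Hin Halt Hc.
pose y (k : 'I_N) := c k; pose col (k : 'I_N) := ind k.
have e1 : \prod_(0 <= k < N) c k = \prod_(k in [set: 'I_N]) y k.
  by rewrite big_mkord; apply: eq_bigl => k; rewrite inE.
have S0 : [set: 'I_N] != set0 by apply/set0Pn; exists (Ordinal N0).
rewrite e1 -/(fy y [set: 'I_N]) moment_cumulant //.
apply: big1 => π Nπ.
case: (boolP [exists V in π, ~~ [forall x in V, forall x' in V, col x == col x']]).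
  move=> /exists_inP[V Vπ /forall_inPn[x xV /forall_inPn[x' x'V ne]]].
  rewrite (bigD1 V) //= kap_sub_relabel.
  rewrite (HV _ _ (fun i => col (enum_val i))) ?mul0r //.
    by move=> k; apply: Hin.
  exists (enum_rank_in xV x), (enum_rank_in xV x'); rewrite !enum_rankK_in //.
move=> /exists_inPn pure.
have [k _ kπ] : exists2 k, k \in [set: 'I_N] & [set k] \in π.
  apply: (alt_singleton (col := col)) => //.
    move=> u v /and4P[_ _ uv /forall_inP nb].
    have ev : val v = u.+1.
      apply/eqP; rewrite eqn_leq uv andbT; rewrite leqNgt; apply/negP => lt.
      have lt2 : (u.+1 < N)%N by exact: ltn_trans lt (ltn_ord v).
      by have := nb (Ordinal lt2) (in_setT _); rewrite /= ltnSn lt.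
    have := Halt u; rewrite -ev ltn_ord => /(_ isT); by [].
  move=> V Vπ x x' xV x'V; have := pure V Vπ; rewrite negbK.
  by move=> /forall_inP /(_ x xV) /forall_inP /(_ x' x'V) /eqP.
rewrite (bigD1 [set k]) //= kap_set1 /fy big_set1 Hc ?mul0r //.
Qed.

End Alg.

Lemma eq_lt n (l k : 'I_n) : (l < k)%N -> (l == k) = false.
Proof. by move=> lk; apply/negbTE; apply: contraTneq lk => ->; rewrite ltnn. Qed.

Lemma eq_gt n (l k : 'I_n) : (k < l)%N -> (l == k) = false.
Proof. by move=> lk; apply/negbTE; apply: contraTneq lk => ->; rewrite ltnn. Qed.

Lemma prod_split3 (B : ringType) n (F : 'I_n -> B) (X : {set 'I_n}) k : k \in X ->
  \prod_(l in X) F l = \prod_(l in [set l in X | (l < k)%N]) F l *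
                       (F k * \prod_(l in [set l in X | (k < l)%N]) F l).
Proof.
move=> kX.
have eX : X = [set l in X | (l < k)%N] :|: ([set k] :|: [set l in X | (k < l)%N]).
  apply/setP => l; rewrite !inE; case: (ltngtP l k) => [lk|kl|e].
  - by rewrite (eq_lt lk); case: (l \in X).
  - by rewrite (eq_gt kl); case: (l \in X).
  - by rewrite (val_inj e) eqxx kX; case: (k \in X).
rewrite {1}eX prod_cat; last first.
  move=> a b; rewrite !inE => /andP[_ ak] /orP[/eqP->|/andP[_ kb]] //.
  exact: ltn_trans ak kb.
rewrite prod_cat ?big_set1 // => a b; rewrite !inE => /eqP-> /andP[].
by [].
Qed.

Lemma eq_kap_in (R : comRingType) n (f g : {set 'I_n} -> R) (S : {set 'I_n}) :
  (forall V : {set 'I_n}, V \subset S -> f V = g V) -> kap f S = kap g S.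
Proof.
move=> e; rewrite /kap; apply: eq_bigr => σ Nσ; congr (_ * _); apply: eq_bigr => V Vσ.
by apply: e; apply: part_sub (proj1 (andP Nσ)) Vσ.
Qed.

Section DirB.
Variables (K : numClosedFieldType) (B : algType K) (phi : B -> K).
Hypotheses (phi_add : forall a b, phi (a + b) = phi a + phi b)
           (phi_scale : forall c a, phi (c *: a) = c * phi a)
           (phi_unit : phi 1 = 1).

Definition upd n (y : 'I_n -> B) k u := fun l => if l == k then u else y l.

Lemma prod_upd n (y : 'I_n -> B) k (X : {set 'I_n}) w : k \in X ->
  \prod_(l in X) upd y k w l = \prod_(l in [set l in X | (l < k)%N]) y l *
                       (w * \prod_(l in [set l in X | (k < l)%N]) y l).
Proof.
move=> kX; rewrite (prod_split3 _ kX) /upd eqxx; congr (_ * (_ * _)).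
  apply: eq_bigr => l; rewrite inE => /andP[_ lk]; case: eqP => // e; by move: lk; rewrite e ltnn.
apply: eq_bigr => l; rewrite inE => /andP[_ lk]; case: eqP => // e; by move: lk; rewrite e ltnn.
Qed.

Lemma fy_upd_out n (y : 'I_n -> B) k u (V : {set 'I_n}) : k \notin V -> fy phi (upd y k u) V = fy phi y V.
Proof.
move=> kV; rewrite /fy; congr phi; apply: eq_bigr => l lV; rewrite /upd.
by case: eqP => // e; move: kV; rewrite -e lV.
Qed.

Lemma kap_lin n (y : 'I_n -> B) k (S : {set 'I_n}) u c : k \in S ->
  kap (fy phi (upd y k (u + c *: 1))) S =
  kap (fy phi (upd y k u)) S + c * kap (fy phi (upd y k 1)) S.
Proof.
move=> kS; rewrite /kap big_distrr -big_split; apply: eq_bigr => σ Nσ /=.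
have [pσ _] := andP Nσ; have cσ := cover_partition pσ.
have kB : k \in pblock σ k by rewrite mem_pblock cσ.
have Bσ : pblock σ k \in σ by apply: pblock_mem; rewrite cσ.
rewrite !(bigD1 _ Bσ) /=.
have eR w : \prod_(V in σ | V != pblock σ k) fy phi (upd y k w) V =
            \prod_(V in σ | V != pblock σ k) fy phi y V.
  apply: eq_bigr => V /andP[Vσ nV]; apply: fy_upd_out; apply/negP => kV.
  by move: nV; rewrite (def_pblock (partition_trivIset pσ) Vσ kV) eqxx.
rewrite !eR /fy !prod_upd // mulrDl mulrDr phi_add mulr_algl -scalerAr phi_scale mul1r.
by rewrite !mulrDl -!mulrA.
Qed.

Lemma kap_unit_slot n (y : 'I_n -> B) k (S : {set 'I_n}) : k \in S -> (1 < #|S|)%N ->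
  kap (fy phi (upd y k 1)) S = 0.
Proof.
move=> kS cS; apply: (unit_cumulant (k := k)) => //.
  by rewrite /fy big_pred0 ?phi_unit // => l; rewrite inE.
move=> U; case: (boolP (k \in U)) => kU; last by rewrite setD1_id.
rewrite /fy prod_upd // mul1r.
have e : U :\ k = [set l in U | (l < k)%N] :|: [set l in U | (k < l)%N].
  apply/setP => l; rewrite !inE; case: (ltngtP l k) => [lk|kl|e].
  - by rewrite (eq_lt lk); case: (l \in U).
  - by rewrite (eq_gt kl); case: (l \in U).
  - by rewrite (val_inj e) eqxx; case: (k \in U).
rewrite e prod_cat; last by move=> a b; rewrite !inE => /andP[_ ak] /andP[_ kb]; exact: ltn_trans ak kb.
congr (phi (_ * _)); apply: eq_bigr => l; rewrite inE => /andP[_ lk];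
  rewrite /upd; case: eqP => // e'; by move: lk; rewrite e' ltnn.
Qed.

Definition cent (x : B) := x - (phi x) *: 1.

Lemma phi_cent x : phi (cent x) = 0.
Proof. by rewrite /cent phi_add -scaleNr phi_scale phi_unit mulr1 subrr. Qed.

Lemma kap_center n (y : 'I_n -> B) k (S : {set 'I_n}) : k \in S -> (1 < #|S|)%N ->
  kap (fy phi y) S = kap (fy phi (upd y k (cent (y k)))) S.
Proof.
move=> kS cS.
have -> : kap (fy phi y) S = kap (fy phi (upd y k (cent (y k) + (phi (y k)) *: 1))) S.
  apply: eq_kap => V; rewrite /fy; congr phi; apply: eq_bigr => l _; rewrite /upd.
  by case: eqP => // ->; rewrite /cent subrK.
by rewrite kap_lin // kap_unit_slot // mulr0 addr0.
Qed.

Definition centS n (y : 'I_n -> B) (T : {set 'I_n}) := fun l => if l \in T then cent (y l) else y l.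

Lemma kap_centS n (y : 'I_n -> B) (S T : {set 'I_n}) : T \subset S -> (1 < #|S|)%N ->
  kap (fy phi y) S = kap (fy phi (centS y T)) S.
Proof.
move=> sTS cS; have [m] := ubnP #|T|; elim: m T sTS => // m IH T sTS lt.
case: (set_0Vmem T) => [->|[k kT]].
  by apply: eq_kap => V; rewrite /fy /centS; congr phi; apply: eq_bigr => l _; rewrite inE.
have sT' : T :\ k \subset S by apply: subset_trans (subD1set _ _) sTS.
rewrite (IH (T :\ k)) //; last by rewrite (cardsD1 k T) kT add1n ltnS in lt.
rewrite (kap_center _ (subsetP sTS k kT) cS).
apply: eq_kap => V; rewrite /fy; congr phi; apply: eq_bigr => l _.
rewrite /upd /centS !inE; case: eqP => [->|nlk] /=; first by rewrite eqxx kT.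
by [].
Qed.

End DirB.

Section DirB2.
Variables (K : numClosedFieldType) (B : algType K) (phi : B -> K).
Hypotheses (phi_add : forall a b, phi (a + b) = phi a + phi b)
           (phi_scale : forall c a, phi (c *: a) = c * phi a)
           (phi_unit : phi 1 = 1).
Variables (a b : B).
Hypothesis Hfree : free_scalar phi a b.

Lemma free_set n (w : 'I_n -> B) (ind : 'I_n -> bool) (S : {set 'I_n}) :
  colored a b w ind -> S != set0 -> alt S ind -> (forall k, k \in S -> phi (w k) = 0) ->
  fy phi w S = 0.
Proof.
move=> cw S0 altS cent0.
have [x0 x0S] := set0Pn _ S0.
set N := #|S|.
have N0 : (0 < N)%N by rewrite card_gt0.
pose c m := w (nth x0 (enum S) m).
pose ind' m := ind (nth x0 (enum S) m).
have ev (k : 'I_N) : nth x0 (enum S) k = enum_val k by rewrite (enum_val_nth x0).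
have e1 : \prod_(k in S) w k = \prod_(0 <= m < N) c m.
  rewrite -{1}(enum_val_im S) prod_mono; last exact: enum_val_mono.
  by rewrite big_mkord; apply: eq_big => [l|l _]; rewrite ?inE // /c ev.
rewrite /fy e1; apply: (Hfree (ind := ind')) => //.
- move=> k kN; rewrite /c /ind' (ev (Ordinal kN)); exact: cw.
- move=> k kN; have kN' : (k < N)%N by exact: ltnW.
  rewrite /ind' (ev (Ordinal kN)) (ev (Ordinal kN')); apply: altS.
  rewrite /adj !enum_valP enum_val_mono /= ltnSn /=.
  apply/forall_inP => x xS; apply/negP => /andP[h1 h2].
  have := enum_rankK_in xS xS => ex; rewrite -ex !enum_val_mono /= in h1 h2.
  by move: h2; rewrite ltnS leqNgt h1.
- move=> k kN; rewrite /c (ev (Ordinal kN)); apply: cent0; exact: enum_valP.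
Qed.

Definition pureS n (ind : 'I_n -> bool) (S : {set 'I_n}) :=
  [forall x in S, forall x' in S, ind x == ind x'].

Lemma alg1_cent (z x : B) : in_alg1 z x -> in_alg1 z (cent phi x).
Proof.
move=> h; rewrite /cent -scaleNr; apply: alg1_add => //; exact: alg1_c.
Qed.

Lemma mixedP n (ind : 'I_n -> bool) (S : {set 'I_n}) :
  ~~ pureS ind S -> exists x, exists x', [/\ x \in S, x' \in S & ind x != ind x'].
Proof.
move=> /forall_inPn[x xS /forall_inPn[x' x'S ne]]; by exists x, x'.
Qed.

Lemma mixed_card n (ind : 'I_n -> bool) (S : {set 'I_n}) : ~~ pureS ind S -> (1 < #|S|)%N.
Proof.
move=> /mixedP[x [x' [xS x'S ne]]].
have nxx : x != x' by apply: contraNneq ne => ->.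
rewrite (cardsD1 x) xS add1n ltnS card_gt0; apply/set0Pn; exists x'.
by rewrite !inE eq_sym nxx.
Qed.

Lemma dirB_main m : forall n (y : 'I_n -> B) ind, colored a b y ind ->
  forall S : {set 'I_n}, (#|S| <= m)%N -> ~~ pureS ind S -> kap (fy phi y) S = 0.
Proof.
elim: m => [|m IH] n y ind cy S cS mS.
  by have := mixed_card mS; rewrite ltnNge (leq_trans cS).
have cS2 := mixed_card mS.
have S0 : S != set0 by rewrite -card_gt0; apply: ltn_trans cS2.
have IHS (y' : 'I_n -> B) (W : {set 'I_n}) : colored a b y' ind -> (#|W| < #|S|)%N ->
    ~~ pureS ind W -> kap (fy phi y') W = 0.
  by move=> cy' lt mW; apply: (IH n y' ind cy' W) => //; rewrite -ltnS (leq_trans lt cS).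
case: (boolP [exists i0, exists j0, adj S i0 j0 && (ind i0 == ind j0)]).
  move=> /existsP[i0 /existsP[j0 /andP[/and4P[i0S j0S ij adjS] /eqP eij]]].
  have adjS' : forall k, k \in S -> ~~ ((i0 < k)%N && (k < j0)%N).
    by move=> k kS; move/forall_inP: adjS => /(_ k kS).
  pose z := upd y i0 (y i0 * y j0).
  have cz : colored a b z ind.
    move=> k; rewrite /z /upd; case: eqP => [->|_]; last exact: cy.
    by apply: alg1_mul; [exact: cy | rewrite eij; exact: cy].
  have nij : i0 != j0 by apply/negP => /eqP e; move: ij; rewrite e ltnn.
  have i0S' : i0 \in S :\ j0 by rewrite !inE nij.
  have US : S :\ j0 \subset S :\ j0 := subxx _.
  have U0 : S :\ j0 != set0 by apply/set0Pn; exists i0.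
  have hS : hat i0 j0 (S :\ j0) = S by rewrite /hat i0S' setD1K.
  have M := merge_formula ij j0S adjS' (fy phi y) US U0.
  rewrite hS in M.
  have ez : kap (fy phi z) (S :\ j0) = kap (fun V => fy phi y (hat i0 j0 V)) (S :\ j0).
    apply: eq_kap_in => V sV; rewrite /fy /hat; case: ifP => iV; last first.
      congr phi; apply: eq_bigr => l lV; rewrite /z /upd; case: eqP => // e.
      by move: iV; rewrite -e lV.
    have jV : j0 \notin V by apply/negP => /(subsetP sV); rewrite !inE eqxx.
    rewrite /z !prod_upd // ?setU1r //; congr phi.
    have e1 : [set l in j0 |: V | (l < i0)%N] = [set l in V | (l < i0)%N].
      apply/setP => l; rewrite !inE; case: eqP => // ->.
      by rewrite ltnNge (ltnW ij) /= ?andbF.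
    have e2 : [set l in j0 |: V | (i0 < l)%N] = [set j0] :|: [set l in V | (i0 < l)%N].
      by apply/setP => l; rewrite !inE; case: eqP => // ->; rewrite ij.
    rewrite [RHS](prod_split3 _ (_ : i0 \in j0 |: V)) ?setU1r // e1 e2 prod_cat ?big_set1 ?mulrA //.
    move=> u v; rewrite !inE => /eqP-> /andP[vV iv].
    have vS : v \in S by have := subsetP sV v vV; rewrite inE => /andP[].
    have := adjS' v vS; rewrite iv /= -leqNgt leq_eqVlt => /orP[/eqP e|//].
    by move: vV; rewrite -(val_inj e) (negbTE jV).
  have z0 : kap (fy phi z) (S :\ j0) = 0.
    apply: IHS => //; first by rewrite (cardsD1 j0 S) j0S.
    have [x [x' [xS x'S ne]]] := mixedP mS.
    pose sw u := if u == j0 then i0 else u.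
    have swS u : u \in S -> sw u \in S :\ j0.
      by move=> uS; rewrite /sw; case: eqP => [_|/eqP nu]; rewrite // !inE nu.
    have swi u : ind (sw u) = ind u by rewrite /sw; case: eqP => // ->.
    apply/negP => /forall_inP /(_ _ (swS x xS)) /forall_inP /(_ _ (swS x' x'S)).
    by rewrite !swi (negbTE ne).
  rewrite -ez z0 /gJ in M.
  rewrite (bigD1 [set S]) /= in M; last first.
    rewrite NCS1 //= /Jn imset_set1 i0S /= (def_pblock (trivIset1 S) (set11 S) i0S).
    by rewrite (def_pblock (trivIset1 S) (set11 S) j0S) setUid.
  rewrite big_set1 big1 ?addr0 in M; first by rewrite M.
  move=> ρ /andP[/andP[Nρ /eqP eJ] n1].
  have [Hb eU] := two_blocks i0S j0S Nρ eJ.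
  have [pρ _] := andP Nρ; have cρ := cover_partition pρ.
  have Biρ : pblock ρ i0 \in ρ by apply: pblock_mem; rewrite cρ.
  have Bjρ : pblock ρ j0 \in ρ by apply: pblock_mem; rewrite cρ.
  have iBi : i0 \in pblock ρ i0 by rewrite mem_pblock cρ.
  have jBj : j0 \in pblock ρ j0 by rewrite mem_pblock cρ.
  have zero W : W \in ρ -> ~~ pureS ind W -> \prod_(V in ρ) kap (fy phi y) V = 0.
    move=> Wρ mW; rewrite (bigD1 W) //= IHS ?mul0r //.
    by case: (block_proper Nρ n1 Wρ).
  case: (boolP (pureS ind (pblock ρ i0))) => pi; last exact: zero _ Biρ pi.
  case: (boolP (pureS ind (pblock ρ j0))) => pj; last exact: zero _ Bjρ pj.
  exfalso; move/negP: mS; apply.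
  have col u : u \in S -> ind u = ind i0.
    rewrite -eU inE => /orP[uB|uB].
      by move/forall_inP: pi => /(_ u uB) /forall_inP /(_ i0 iBi) /eqP.
    move/forall_inP: pj => /(_ u uB) /forall_inP /(_ j0 jBj) /eqP ->; by rewrite eij.
  by apply/forall_inP => u uS; apply/forall_inP => u' u'S; rewrite !col.
move=> noadj.
have altS : alt S ind.
  move=> u v huv; apply/negP => /eqP e; move/negP: noadj; apply.
  by apply/existsP; exists u; apply/existsP; exists v; rewrite huv e eqxx.
pose yc := centS phi y S.
have cyc : colored a b yc ind.
  by move=> k; rewrite /yc /centS; case: (k \in S); [apply: alg1_cent|]; exact: cy.
rewrite (kap_centS phi_add phi_scale phi_unit y (subxx S) cS2) -/yc.
have F0 : fy phi yc S = 0.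
  apply: (free_set cyc S0 altS) => k kS; rewrite /yc /centS kS; exact: phi_cent.
have := moment_cumulant (fy phi yc) S0; rewrite F0 (bigD1 [set S]) ?NCS1 //= big_set1.
rewrite big1 ?addr0; first by move/esym.
move=> π /andP[Nπ n1].
case: (boolP [exists V in π, ~~ pureS ind V]).
  move=> /exists_inP[V Vπ mV]; rewrite (bigD1 V) //= IHS ?mul0r //.
  by case: (block_proper Nπ n1 Vπ).
move=> /exists_inPn allp.
have [k kS kπ] : exists2 k, k \in S & [set k] \in π.
  apply: (alt_singleton (col := ind)) => // V Vπ u u' uV u'V.
  by have := allp V Vπ; rewrite negbK => /forall_inP /(_ u uV) /forall_inP /(_ u' u'V) /eqP.
rewrite (bigD1 [set k]) //= kap_set1 /fy big_set1 /yc /centS kS phi_cent ?mul0r //.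
Qed.

Lemma dirB : VanMixed phi a b.
Proof.
move=> n y ind cy [k [l nkl]]; apply: (dirB_main cy (leqnn _)).
apply/negP => /forall_inP /(_ k (in_setT _)) /forall_inP /(_ l (in_setT _)).
by rewrite (negbTE nkl).
Qed.

End DirB2.

Section Zero.
Variables (K : numClosedFieldType) (B : algType K) (phi : B -> K).
Hypotheses (phi_add : forall a b, phi (a + b) = phi a + phi b)
           (phi_scale : forall c a, phi (c *: a) = c * phi a)
           (phi_unit : phi 1 = 1).

Lemma alg1_zero (c : B) : in_alg1 0 c -> exists r : K, c = r%:A.
Proof.
elim => [|r|y z _ [r ->] _ [s ->]|y z _ [r ->] _ [s ->]].
- by exists 0; rewrite scale0r.
- by exists r.
- by exists (r + s); rewrite scalerDl.
- by exists (r * s); rewrite -scalerAl mul1r scalerA.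
Qed.

Lemma phi0 : phi 0 = 0.
Proof. by have := phi_scale 0 1; rewrite scale0r mul0r. Qed.

Lemma prod_zero (c : nat -> B) n k : (k < n)%N -> c k = 0 -> \prod_(0 <= i < n) c i = 0.
Proof.
move=> kn ck; rewrite (big_cat_nat (leq0n k) (ltnW kn)) /= [\prod_(k <= i < n) _]big_ltn //.
by rewrite ck mul0r mulr0.
Qed.

Lemma free_zero (a b : B) : a = 0 \/ b = 0 -> free_scalar phi a b.
Proof.
move=> ab n c ind n0 Hin Halt Hc.
case: n n0 Hin Halt Hc => // [[|n]] _ Hin Halt Hc.
  by rewrite big_nat1; apply: Hc.
have [k [kn hk]] : exists k, (k < n.+2)%N /\ in_alg1 0 (c k).
  case: ab => [a0|b0].
    case: (boolP (ind 0%N)) => i0.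
      by exists 0%N; split => //; have := Hin 0%N isT; rewrite i0 a0.
    have i1 : ind 1%N by have := Halt 0%N isT; rewrite (negbTE i0); case: (ind 1%N).
    by exists 1%N; split => //; have := Hin 1%N isT; rewrite i1 a0.
  case: (boolP (ind 0%N)) => i0; last first.
    by exists 0%N; split => //; have := Hin 0%N isT; rewrite (negbTE i0) b0.
  have i1 : ~~ ind 1%N by have := Halt 0%N isT; rewrite i0; case: (ind 1%N).
  by exists 1%N; split => //; have := Hin 1%N isT; rewrite (negbTE i1) b0.
have [r er] := alg1_zero hk.
have r0 : r = 0 by have := Hc k kn; rewrite er phi_scale phi_unit mulr1.
by rewrite (prod_zero kn (_ : c k = 0)) ?phi0 // er r0 scale0r.
Qed.

End Zero.

Section Main.
Variables (C : numClosedFieldType) (N : nat) (A : 'I_N -> algType C).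

Lemma algD_comp (x y : prodA A) (j : 'I_N) : in_algD x y -> in_alg1 (x j) (y j).
Proof.
elim => [|d|y1 z1 _ h1 _ h2|y1 z1 _ h1 _ h2].
- exact: alg1_a.
- exact: alg1_c.
- exact: alg1_add.
- exact: alg1_mul.
Qed.

Lemma alg1_lift (x : prodA A) (j : 'I_N) (c : A j) : in_alg1 (x j) c ->
  exists y, in_algD x y /\ y j = c.
Proof.
elim => [|r|y1 z1 _ [Y1 [h1 e1]] _ [Z1 [h2 e2]]|y1 z1 _ [Y1 [h1 e1]] _ [Z1 [h2 e2]]].
- by exists x; split => //; exact: algD_x.
- by exists (@prod_D C N A (fun _ => r)); split => //; exact: algD_D.
- by exists (prod_add Y1 Z1); split; [exact: algD_add | rewrite /prod_add e1 e2].
- by exists (prod_mul Y1 Z1); split; [exact: algD_mul | rewrite /prod_mul e1 e2].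
Qed.

Lemma cumD_kap (phi : forall j, A j -> C) n (y : 'I_n -> prodA A) j :
  cumD phi y j = kap (fy (phi j) (fun i => y i j)) [set: 'I_n].
Proof.
rewrite /cumD /kap; apply: eq_bigr => P _; by rewrite mobE.
Qed.

End Main.

Theorem mainTheorem3 (C : numClosedFieldType) (N : nat) (A : 'I_N -> algType C)
    (phi : forall j, A j -> C)
    (phi_add : forall j (a b : A j), phi j (a + b) = phi j a + phi j b)
    (phi_scale : forall j (c : C) (a : A j), phi j (c *: a) = c * phi j a)
    (phi_unit : forall j, phi j 1 = 1)
    (x1 x2 : prodA A) :
  free_over_D phi x1 x2 <->
  (forall j : 'I_N, x1 j != 0 -> x2 j != 0 -> free_scalar (phi j) (x1 j) (x2 j)).
Proof.
split.
  move=> H j _ _; apply: dirA => n w ind cw mix.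
  have ex k : exists yk, in_algD (if ind k then x1 else x2) yk /\ yk j = w k.
    apply: alg1_lift; have := cw k; by case: (ind k).
  have [y hy] := fin_all_exists ex.
  have := H n y ind (fun k => proj1 (hy k)) mix j; rewrite cumD_kap => <-.
  apply: eq_kap => V; rewrite /fy; congr (phi j); apply: eq_bigr => i _.
  by rewrite (proj2 (hy i)).
move=> H n y ind Hin mix j; rewrite cumD_kap.
have Hf : free_scalar (phi j) (x1 j) (x2 j).
  case: (eqVneq (x1 j) 0) => [e|n1].
    by apply: free_zero; [exact: phi_scale | exact: phi_unit | left].
  case: (eqVneq (x2 j) 0) => [e|n2].
    by apply: free_zero; [exact: phi_scale | exact: phi_unit | right].
  exact: H.
apply: (dirB (phi_add j) (phi_scale j) (phi_unit j) Hf) mix => k.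
by have := algD_comp j (Hin k); case: (ind k).
Qed.
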